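(* If $F\in\mathbb{P}(\mathbb{Z})$ is aperiodic and $\sum_{k\in\mathbb{Z}}k^2F(k)<\infty$, then there exist $\beta\in(0,1)$ and $G\in L^1(\mathbb{Z})$ with $\sup_{n\in\mathbb{N}}\|G^{(n)}\|_{L^1(\mathbb{Z})}<\infty$ such that $F=\beta G+(1-\beta)\delta_0$.
   Context: $L^1(\mathbb{Z})$ is the Banach algebra of summable $F:\mathbb{Z}\to\mathbb{C}$ with norm $\sum_k|F(k)|$ and convolution $(F_1*F_2)(m)=\sum_kF_1(k)F_2(m-k)$; $G^{(n)}$ is the $n$-th convolution power and $\delta_m$ the point mass at $m$. $\mathbb{P}(\mathbb{Z})$ is the set of $F\in L^1(\mathbb{Z})$ with $F\ge0$, $\sum F=1$. $F$ is adapted if $\mathrm{supp}(F)=\{k:F(k)\ne0\}$ generates the group $\mathbb{Z}$, and aperiodic if every translate $\delta_m*F$, $m\in\mathbb{Z}$, is adapted. *)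

(* Defs.v *)
From Stdlib Require Import Reals ZArith Lra.
From Coquelicot Require Import Coquelicot.
Open Scope R_scope.

(* A function on Z is split into its nonnegative part k = 0,1,2,...
   and its negative part k = -1,-2,... *)
Definition zpos (F : Z -> R) : nat -> R := fun n => F (Z.of_nat n).
Definition zneg (F : Z -> R) : nat -> R := fun n => F (- Z.of_nat (S n))%Z.

Definition summable (F : Z -> R) : Prop :=
  ex_series (fun n => Rabs (zpos F n)) /\ ex_series (fun n => Rabs (zneg F n)).

(* sum over Z (meaningful for summable F) *)
Definition zsum (F : Z -> R) : R := Series (zpos F) + Series (zneg F).

Definition L1norm (F : Z -> R) : R := zsum (fun k => Rabs (F k)).

Definition delta (m : Z) : Z -> R := fun k => if Z.eq_dec k m then 1 else 0.

Definition conv (F1 F2 : Z -> R) : Z -> R :=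
  fun m => zsum (fun k => F1 k * F2 (m - k)%Z).

Fixpoint convpow (G : Z -> R) (n : nat) : Z -> R :=
  match n with
  | O => delta 0
  | S n' => conv G (convpow G n')
  end.

Definition prob (F : Z -> R) : Prop :=
  (forall k, 0 <= F k) /\ summable F /\ zsum F = 1.

Definition generates_Z (S : Z -> Prop) : Prop :=
  forall H : Z -> Prop,
    H 0%Z -> (forall a b, H a -> H b -> H (a - b)%Z) ->
    (forall x, S x -> H x) -> forall z, H z.

Definition supp (F : Z -> R) : Z -> Prop := fun k => F k <> 0.

Definition adapted (F : Z -> R) : Prop := generates_Z (supp F).

Definition aperiodic (F : Z -> R) : Prop :=
  forall m : Z, adapted (conv (delta m) F).

(* Main.v *)
Require Import Defs.
From Stdlib Require Import Reals ZArith.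
From Coquelicot Require Import Coquelicot.
From Stdlib Require Import Lra Lia List.
From Stdlib Require Classical_Prop.
Open Scope R_scope.

Lemma is_series_lim (a : nat -> R) l : is_series a l <-> is_lim_seq (sum_n a) l.
Proof. split; intro H; exact H. Qed.

Lemma sum_n_single0 (a : nat -> R) p :
  (forall n, n <> p -> a n = 0) -> forall N, sum_n a N = if Nat.leb p N then a p else 0.
Proof.
  intros Ha N. induction N.
  - rewrite sum_O. destruct p; simpl; auto.
  - rewrite sum_Sn, IHN. unfold plus; simpl.
    destruct (Nat.eq_dec p (S N)).
    + subst. replace (Nat.leb (S N) N) with false by (symmetry; apply Nat.leb_gt; lia).
      rewrite Nat.leb_refl. ring.
    + rewrite (Ha (S N)) by lia.
      destruct (Nat.leb p N) eqn:E1; destruct (Nat.leb p (S N)) eqn:E2; try ring.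
      apply Nat.leb_le in E1. apply Nat.leb_gt in E2. lia.
      apply Nat.leb_gt in E1. apply Nat.leb_le in E2. lia.
Qed.

Lemma sum_n_single (a : nat -> R) p :
  (forall n, n <> p -> a n = 0) -> forall N, (p <= N)%nat -> sum_n a N = a p.
Proof.
  intros Ha N HN. rewrite (sum_n_single0 a p Ha N).
  apply Nat.leb_le in HN. now rewrite HN.
Qed.

Lemma is_series_single (a : nat -> R) p :
  (forall n, n <> p -> a n = 0) -> is_series a (a p).
Proof.
  intros Ha. apply is_series_lim.
  apply is_lim_seq_ext_loc with (fun _ => a p).
  exists p. intros N HN. symmetry. now apply sum_n_single.
  apply is_lim_seq_const.
Qed.

Lemma is_series_zero : is_series (fun _ : nat => 0) 0.
Proof. apply (is_series_single (fun _ => 0) 0). auto. Qed.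

Definition zis (f : Z -> R) (l : R) : Prop :=
  exists lp ln, is_series (zpos f) lp /\ is_series (zneg f) ln /\ l = lp + ln.

Lemma zis_zsum f l : zis f l -> zsum f = l.
Proof.
  intros (lp & ln & H1 & H2 & ->). unfold zsum.
  now rewrite (is_series_unique _ _ H1), (is_series_unique _ _ H2).
Qed.

Lemma zis_ext f g l : (forall k, f k = g k) -> zis f l -> zis g l.
Proof.
  intros E (lp & ln & H1 & H2 & ->). exists lp, ln; repeat split; auto.
  eapply is_series_ext; [|exact H1]. intro; apply E.
  eapply is_series_ext; [|exact H2]. intro; apply E.
Qed.

Lemma zis_plus f g l1 l2 : zis f l1 -> zis g l2 -> zis (fun k => f k + g k) (l1 + l2).
Proof.
  intros (lp & ln & H1 & H2 & ->) (lp' & ln' & H1' & H2' & ->).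
  exists (lp + lp'), (ln + ln'); repeat split.
  apply (is_series_plus _ _ _ _ H1 H1').
  apply (is_series_plus _ _ _ _ H2 H2'). ring.
Qed.

Lemma zis_scal c f l : zis f l -> zis (fun k => c * f k) (c * l).
Proof.
  intros (lp & ln & H1 & H2 & ->).
  exists (c * lp), (c * ln); repeat split.
  apply (is_series_scal_l c _ _ H1).
  apply (is_series_scal_l c _ _ H2). ring.
Qed.

Lemma is_series_le_nat (a b : nat -> R) la lb :
  is_series a la -> is_series b lb -> (forall n, a n <= b n) -> la <= lb.
Proof.
  intros Ha Hb H.
  apply is_series_lim in Ha. apply is_series_lim in Hb.
  assert (Rbar_le la lb). { eapply is_lim_seq_le; [|exact Ha|exact Hb].
    intro n. unfold sum_n. apply sum_n_m_le. auto. }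
  exact H0.
Qed.

Lemma zis_le f g l1 l2 : zis f l1 -> zis g l2 -> (forall k, f k <= g k) -> l1 <= l2.
Proof.
  intros (lp & ln & H1 & H2 & ->) (lp' & ln' & H1' & H2' & ->) H.
  assert (lp <= lp') by (eapply is_series_le_nat; eauto; intro; apply H).
  assert (ln <= ln') by (eapply is_series_le_nat; eauto; intro; apply H). lra.
Qed.

Lemma zis_single f m : (forall k, k <> m -> f k = 0) -> zis f (f m).
Proof.
  intros Hf. destruct (Z_le_gt_dec 0 m).
  - exists (f m), 0. repeat split; [| |ring].
    + replace (f m) with (zpos f (Z.to_nat m)) by (unfold zpos; f_equal; lia).
      apply is_series_single. intros n Hn. apply Hf. lia.
    + eapply is_series_ext; [|exact is_series_zero]. intro n. symmetry. apply Hf.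
      lia.
  - exists 0, (f m). repeat split; [| |ring].
    + eapply is_series_ext; [|exact is_series_zero]. intro n. symmetry. apply Hf.
      lia.
    + replace (f m) with (zneg f (Z.to_nat (- m - 1))) by (unfold zneg; f_equal; lia).
      apply is_series_single. intros n Hn. apply Hf. lia.
Qed.

Lemma summable_zis f : summable f -> zis f (zsum f).
Proof.
  intros [H1 H2]. exists (Series (zpos f)), (Series (zneg f)).
  repeat split; try apply Series_correct; try apply ex_series_Rabs; auto.
Qed.

Lemma summable_le f g : (forall k, Rabs (f k) <= g k) -> summable g -> summable f.
Proof.
  intros H [H1 H2]. split.
  - eapply (@ex_series_le R_AbsRing R_CompleteNormedModule); [|exact H1]. intro n. unfold zpos.
    simpl. unfold abs. simpl. rewrite Rabs_Rabsolu.
    eapply Rle_trans; [apply H|apply Rle_abs].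
  - eapply (@ex_series_le R_AbsRing R_CompleteNormedModule); [|exact H2]. intro n. unfold zneg.
    simpl. unfold abs. simpl. rewrite Rabs_Rabsolu.
    eapply Rle_trans; [apply H|apply Rle_abs].
Qed.

Lemma ct_plus f g : continuity f -> continuity g -> continuity (fun x => f x + g x).
Proof. intros. exact (continuity_plus f g H H0). Qed.
Lemma ct_minus f g : continuity f -> continuity g -> continuity (fun x => f x - g x).
Proof. intros. exact (continuity_minus f g H H0). Qed.
Lemma ct_mult f g : continuity f -> continuity g -> continuity (fun x => f x * g x).
Proof. intros. exact (continuity_mult f g H H0). Qed.
Lemma ct_const c : continuity (fun _ => c).
Proof. intro x. apply continuity_pt_const. intros a b; auto. Qed.
Lemma ct_id : continuity (fun x => x).
Proof. exact (derivable_continuous _ derivable_id). Qed.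
Lemma ct_comp f g : continuity f -> continuity g -> continuity (fun x => g (f x)).
Proof. intros. exact (continuity_comp f g H H0). Qed.
Lemma ct_cos c : continuity (fun x => cos (c * x)).
Proof. apply (ct_comp (fun x => c * x) cos). apply ct_mult. apply ct_const. apply ct_id. exact continuity_cos. Qed.
Lemma ct_sin c : continuity (fun x => sin (c * x)).
Proof. apply (ct_comp (fun x => c * x) sin). apply ct_mult. apply ct_const. apply ct_id. exact continuity_sin. Qed.
Lemma ct_abs f : continuity f -> continuity (fun x => Rabs (f x)).
Proof. intros. apply ct_comp; auto. exact Rcontinuity_abs. Qed.
Lemma ct_pow f n : continuity f -> continuity (fun x => f x ^ n).
Proof. intros. induction n. simpl. apply ct_const. simpl. apply ct_mult; auto. Qed.
Lemma ct_sqrt f : continuity f -> (forall x, 0 <= f x) -> continuity (fun x => sqrt (f x)).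
Proof. intros H H0 x. apply (continuity_pt_comp f sqrt). apply H. apply continuity_pt_sqrt. auto. Qed.

Lemma ct_exRInt f a b : continuity f -> ex_RInt f a b.
Proof. intros H. apply (@ex_RInt_continuous R_CompleteNormedModule). intros z _. apply continuity_pt_filterlim. apply H. Qed.

Lemma partial_diff_bound (a b : nat -> R) N d :
  (forall n, Rabs (b n) <= Rabs (a n)) ->
  Rabs (sum_n b (N + d) - sum_n b N) <= sum_n (fun n => Rabs (a n)) (N + d) - sum_n (fun n => Rabs (a n)) N.
Proof.
  intros H. induction d.
  - rewrite Nat.add_0_r. rewrite !Rminus_diag, Rabs_R0. lra.
  - rewrite Nat.add_succ_r, !sum_Sn. unfold plus; simpl.
    replace (sum_n b (N + d) + b (S (N + d)) - sum_n b N) with ((sum_n b (N + d) - sum_n b N) + b (S (N+d))) by ring.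
    eapply Rle_trans. apply Rabs_triang. assert (H1 := H (S (N+d))). lra.
Qed.

Definition tail (a : nat -> R) N := Series (fun n => Rabs (a n)) - sum_n (fun n => Rabs (a n)) N.

Lemma tail_lim a : ex_series (fun n => Rabs (a n)) -> is_lim_seq (tail a) 0.
Proof.
  intros H. unfold tail.
  replace 0 with (Series (fun n => Rabs (a n)) - Series (fun n => Rabs (a n))) by ring.
  apply is_lim_seq_minus'. apply is_lim_seq_const. apply Series_correct in H. exact H.
Qed.

Lemma tail_bound (a b : nat -> R) N :
  ex_series (fun n => Rabs (a n)) -> (forall n, Rabs (b n) <= Rabs (a n)) ->
  Rabs (Series b - sum_n b N) <= tail a N.
Proof.
  intros Ha Hb.
  assert (Eb : ex_series b).
  { apply ex_series_Rabs. eapply (@ex_series_le R_AbsRing R_CompleteNormedModule); [|exact Ha].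
    intro n. simpl. unfold abs; simpl. rewrite Rabs_Rabsolu. auto. }
  apply Series_correct in Eb. apply Series_correct in Ha.
  assert (L1 : is_lim_seq (fun M => Rabs (sum_n b M - sum_n b N)) (Rabs (Series b - sum_n b N))).
  { apply (is_lim_seq_abs _ (Series b - sum_n b N)). apply is_lim_seq_minus'. exact Eb. apply is_lim_seq_const. }
  assert (L2 : is_lim_seq (fun M => sum_n (fun n => Rabs (a n)) M - sum_n (fun n => Rabs (a n)) N) (tail a N)).
  { apply is_lim_seq_minus'. exact Ha. apply is_lim_seq_const. }
  assert (Rbar_le (Rabs (Series b - sum_n b N)) (tail a N)).
  { eapply is_lim_seq_le_loc; [|exact L1|exact L2]. exists N. intros M HM.
    replace M with (N + (M - N))%nat by lia. apply partial_diff_bound. auto. }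
  exact H.
Qed.

Lemma series_cont (a : nat -> R) (f : nat -> R -> R) :
  ex_series (fun n => Rabs (a n)) -> (forall n x, Rabs (f n x) <= 1) ->
  (forall n, continuity (f n)) ->
  continuity (fun x => Series (fun n => a n * f n x)).
Proof.
  intros Ha Hf Hc x.
  apply (CVU_cont_open (fun N x => sum_n (fun n => a n * f n x) N) (fun _ => True)); auto.
  - apply open_true.
  - intros eps. assert (T := tail_lim a Ha).
    apply is_lim_seq_spec in T. destruct (T eps) as [N HN].
    exists N. intros n Hn y _.
    assert (Hb := tail_bound a (fun k => a k * f k y) n Ha).
    rewrite Rabs_minus_sym. unfold Series in Hb.
    eapply Rle_lt_trans. apply Hb. intro k. rewrite Rabs_mult.
    specialize (Hf k y). assert (0 <= Rabs (a k)) by apply Rabs_pos. nra.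
    specialize (HN n Hn). rewrite Rminus_0_r in HN. eapply Rle_lt_trans; [apply Rle_abs|exact HN].
  - intros N y _. induction N.
    + apply continuity_pt_ext with (fun y => a 0%nat * f 0%nat y).
      intro. now rewrite sum_O. apply ct_mult. apply ct_const. apply Hc.
    + apply continuity_pt_ext with (fun y => sum_n (fun n => a n * f n y) N + a (S N) * f (S N) y).
      intro. now rewrite sum_Sn. apply continuity_pt_plus. apply IHN.
      apply ct_mult. apply ct_const. apply Hc.
Qed.

Lemma RInt_sum_n (a : nat -> R) (f : nat -> R -> R) u lo hi N :
  (forall n, continuity (f n)) -> continuity u ->
  sum_n (fun n => a n * RInt (fun t => u t * f n t) lo hi) N =
  RInt (fun t => u t * sum_n (fun n => a n * f n t) N) lo hi.
Proof.
  intros Hc Hu. induction N.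
  - rewrite sum_O. rewrite <- (RInt_scal (V := R_CompleteNormedModule)).
    apply RInt_ext. intros. rewrite sum_O. unfold scal; simpl. unfold mult; simpl. ring.
    apply ct_exRInt. apply ct_mult; auto.
  - rewrite sum_Sn, IHN. unfold plus; simpl.
    assert (CN : continuity (fun t => sum_n (fun n => a n * f n t) N)).
    { clear IHN. induction N.
      intro y. apply continuity_pt_ext with (fun y => a 0%nat * f 0%nat y).
      intro. now rewrite sum_O. apply ct_mult. apply ct_const. apply Hc.
      intro y. apply continuity_pt_ext with (fun y => sum_n (fun n => a n * f n y) N + a (S N) * f (S N) y).
      intro. now rewrite sum_Sn. apply continuity_pt_plus. apply IHN.
      apply ct_mult. apply ct_const. apply Hc. }
    rewrite <- (RInt_scal (V := R_CompleteNormedModule)).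
    rewrite <- (RInt_plus (V := R_CompleteNormedModule)).
    apply RInt_ext. intros. rewrite sum_Sn. unfold scal, plus; simpl. unfold mult; simpl. ring.
    apply ct_exRInt. apply ct_mult; auto.
    apply ct_exRInt. apply ct_mult. apply ct_const. apply ct_mult; auto.
    apply ct_exRInt. apply ct_mult; auto.
Qed.

Lemma exch (a : nat -> R) (f : nat -> R -> R) u lo hi :
  lo <= hi ->
  ex_series (fun n => Rabs (a n)) -> (forall n x, Rabs (f n x) <= 1) ->
  (forall n, continuity (f n)) -> continuity u ->
  is_series (fun n => a n * RInt (fun t => u t * f n t) lo hi)
            (RInt (fun t => u t * Series (fun n => a n * f n t)) lo hi).
Proof.
  intros Hlh Ha Hf Hc Hu.
  destruct (continuity_ab_maj (fun t => Rabs (u t)) lo hi Hlh) as [m [Hm _]].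
  { intros. apply ct_abs. auto. }
  set (U := Rabs (u m)).
  assert (HS := series_cont a f Ha Hf Hc).
  apply is_series_lim.
  apply is_lim_seq_ext with (fun N => RInt (fun t => u t * sum_n (fun n => a n * f n t) N) lo hi).
  { intros N. symmetry. apply RInt_sum_n; auto. }
  apply is_lim_seq_spec. intros eps.
  assert (T := tail_lim a Ha). apply is_lim_seq_spec in T.
  assert (Hpos : 0 < eps / ((hi - lo) * U + 1)).
  { apply Rdiv_lt_0_compat. apply cond_pos. assert (0 <= U) by apply Rabs_pos. nra. }
  destruct (T (mkposreal _ Hpos)) as [N HN]. exists N. intros n Hn.
  assert (CN : continuity (fun t => sum_n (fun k => a k * f k t) n)).
  { clear HN Hn. induction n.
      intro y. apply continuity_pt_ext with (fun y => a 0%nat * f 0%nat y).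
      intro. now rewrite sum_O. apply ct_mult. apply ct_const. apply Hc.
      intro y. apply continuity_pt_ext with (fun y => sum_n (fun k => a k * f k y) n + a (S n) * f (S n) y).
      intro. now rewrite sum_Sn. apply continuity_pt_plus. apply IHn.
      apply ct_mult. apply ct_const. apply Hc. }
  rewrite <- (RInt_minus (V := R_CompleteNormedModule)).
  2,3: apply ct_exRInt; apply ct_mult; auto.
  eapply Rle_lt_trans. apply abs_RInt_le_const with (M := U * tail a n). exact Hlh.
  apply ct_exRInt. apply ct_minus; apply ct_mult; auto.
  intros t Ht. unfold minus, plus, opp; simpl.
  replace (u t * sum_n (fun k => a k * f k t) n + - (u t * Series (fun k => a k * f k t)))
    with (- (u t * (Series (fun k => a k * f k t) - sum_n (fun k => a k * f k t) n))) by ring.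
  rewrite Rabs_Ropp, Rabs_mult. apply Rmult_le_compat. apply Rabs_pos. apply Rabs_pos.
  apply Hm; auto. apply tail_bound; auto. intro k. rewrite Rabs_mult.
  specialize (Hf k t). assert (0 <= Rabs (a k)) by apply Rabs_pos. nra.
  specialize (HN n Hn). simpl in HN. rewrite Rminus_0_r in HN.
  assert (0 <= tail a n).
  { eapply Rle_trans. apply Rabs_pos. apply (tail_bound a a n Ha). intro; lra. }
  rewrite Rabs_pos_eq in HN by auto.
  assert (0 <= U) by apply Rabs_pos.
  assert ((hi - lo) * (U * tail a n) <= ((hi - lo) * U + 1) * tail a n) by nra.
  assert (((hi - lo) * U + 1) * tail a n < eps).
  { apply Rmult_lt_compat_l with (r := (hi - lo) * U + 1) in HN. 2: nra.
    field_simplify in HN. lra. nra. }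
  lra.
Qed.


Definition hatc (w : Z -> R) (t : R) := zsum (fun j => w j * cos (IZR j * t)).
Definition hats (w : Z -> R) (t : R) := zsum (fun j => w j * sin (IZR j * t)).
Definition hat (w : Z -> R) (t : R) : C := (hatc w t, hats w t).

Definition rep (psi : R -> C) (k : Z) : R :=
  / (2 * PI) * RInt (fun t => fst (psi t) * cos (IZR k * t) + snd (psi t) * sin (IZR k * t)) (- PI) PI.

Definition ctC (psi : R -> C) := continuity (fun t => fst (psi t)) /\ continuity (fun t => snd (psi t)).

Lemma summable_abs w : summable w -> summable (fun k => Rabs (w k)).
Proof.
  intros [H1 H2]. split.
  - eapply ex_series_ext; [|exact H1]. intro n. unfold zpos. now rewrite Rabs_Rabsolu.
  - eapply ex_series_ext; [|exact H2]. intro n. unfold zneg. now rewrite Rabs_Rabsolu.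
Qed.

Lemma summable_trig w (c : Z -> R -> R) t : summable w -> (forall j, Rabs (c j t) <= 1) ->
  summable (fun j => w j * c j t).
Proof.
  intros Hw Hc. apply summable_le with (fun k => Rabs (w k)); [|now apply summable_abs].
  intro k. rewrite Rabs_mult. specialize (Hc k). assert (0 <= Rabs (w k)) by apply Rabs_pos. nra.
Qed.

Lemma abs_cos_le1 x : Rabs (cos x) <= 1.
Proof. apply Rabs_le. apply COS_bound. Qed.
Lemma abs_sin_le1 x : Rabs (sin x) <= 1.
Proof. apply Rabs_le. apply SIN_bound. Qed.

Lemma ct_series_idx (a : nat -> R) (idx : nat -> Z) (tr : R -> R) :
  ex_series (fun n => Rabs (a n)) -> continuity tr -> (forall x, Rabs (tr x) <= 1) ->
  continuity (fun t => Series (fun n => a n * tr (IZR (idx n) * t))).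
Proof.
  intros Ha Htr Hb. apply (series_cont a (fun n t => tr (IZR (idx n) * t))); auto.
  intros n. apply (ct_comp (fun x => IZR (idx n) * x) tr). apply ct_mult. apply ct_const. apply ct_id. auto.
Qed.

Lemma ct_hat_gen w (tr : R -> R) : summable w -> continuity tr -> (forall x, Rabs (tr x) <= 1) ->
  continuity (fun t => zsum (fun j => w j * tr (IZR j * t))).
Proof.
  intros [H1 H2] Htr Hb. unfold zsum. apply ct_plus.
  apply (ct_series_idx (zpos w) (fun n => Z.of_nat n) tr); auto.
  apply (ct_series_idx (zneg w) (fun n => (- Z.of_nat (S n))%Z) tr); auto.
Qed.

Lemma ct_hat w : summable w -> ctC (hat w).
Proof.
  intros Hw. split; simpl.
  apply ct_hat_gen; auto. exact continuity_cos. exact abs_cos_le1.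
  apply ct_hat_gen; auto. exact continuity_sin. exact abs_sin_le1.
Qed.

Lemma rep_shift psi k j :
  rep psi (k - j) = / (2 * PI) * RInt (fun t =>
     (fst (psi t) * cos (IZR k * t) + snd (psi t) * sin (IZR k * t)) * cos (IZR j * t) +
     (fst (psi t) * sin (IZR k * t) - snd (psi t) * cos (IZR k * t)) * sin (IZR j * t)) (- PI) PI.
Proof.
  unfold rep. f_equal. apply RInt_ext. intros t _. simpl.
  rewrite minus_IZR. replace ((IZR k - IZR j) * t) with (IZR k * t - IZR j * t) by ring.
  rewrite cos_minus, sin_minus. ring.
Qed.

Lemma PI_pos' : 0 < PI. Proof. exact PI_RGT_0. Qed.

Lemma conv_rep_nat (a : nat -> R) (idx : nat -> Z) psi k :
  ex_series (fun n => Rabs (a n)) -> ctC psi ->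
  is_series (fun n => a n * rep psi (k - idx n))
    (/ (2 * PI) * (RInt (fun t => (fst (psi t) * cos (IZR k * t) + snd (psi t) * sin (IZR k * t)) *
                            Series (fun n => a n * cos (IZR (idx n) * t))) (- PI) PI +
                   RInt (fun t => (fst (psi t) * sin (IZR k * t) - snd (psi t) * cos (IZR k * t)) *
                            Series (fun n => a n * sin (IZR (idx n) * t))) (- PI) PI)).
Proof.
  intros Ha [Hp Hq].
  set (u := fun t => fst (psi t) * cos (IZR k * t) + snd (psi t) * sin (IZR k * t)).
  set (v := fun t => fst (psi t) * sin (IZR k * t) - snd (psi t) * cos (IZR k * t)).
  assert (Cu : continuity u). { apply ct_plus; apply ct_mult; auto. apply ct_cos. apply ct_sin. }
  assert (Cv : continuity v). { apply ct_minus; apply ct_mult; auto. apply ct_sin. apply ct_cos. }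
  assert (Hlh : - PI <= PI) by (assert (H := PI_pos'); lra).
  assert (E1 := exch a (fun n t => cos (IZR (idx n) * t)) u (- PI) PI Hlh Ha
     (fun n x => abs_cos_le1 _) (fun n => ct_cos _) Cu).
  assert (E2 := exch a (fun n t => sin (IZR (idx n) * t)) v (- PI) PI Hlh Ha
     (fun n x => abs_sin_le1 _) (fun n => ct_sin _) Cv).
  assert (E := is_series_plus _ _ _ _ E1 E2).
  apply (is_series_scal_l (/ (2 * PI))) in E.
  eapply is_series_ext; [|exact E]. intro n. simpl.
  rewrite rep_shift. unfold scal, plus; simpl. unfold mult; simpl.
  assert (HP : RInt (fun t => u t * cos (IZR (idx n) * t) + v t * sin (IZR (idx n) * t)) (- PI) PI
     = RInt (fun t => u t * cos (IZR (idx n) * t)) (- PI) PI + RInt (fun t => v t * sin (IZR (idx n) * t)) (- PI) PI).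
  { apply (RInt_plus (V := R_CompleteNormedModule)).
    - apply ct_exRInt. apply ct_mult; auto. apply ct_cos.
    - apply ct_exRInt. apply ct_mult; auto. apply ct_sin. }
  unfold u, v in HP. rewrite HP. unfold u, v. ring.
Qed.

Lemma RInt_plus4 (f1 f2 f3 f4 : R -> R) a b :
  continuity f1 -> continuity f2 -> continuity f3 -> continuity f4 ->
  RInt (fun t => f1 t + f2 t + f3 t + f4 t) a b = RInt f1 a b + RInt f2 a b + RInt f3 a b + RInt f4 a b.
Proof.
  intros C1 C2 C3 C4.
  rewrite (RInt_plus (V := R_CompleteNormedModule) (fun t => f1 t + f2 t + f3 t) f4).
  rewrite (RInt_plus (V := R_CompleteNormedModule) (fun t => f1 t + f2 t) f3).
  rewrite (RInt_plus (V := R_CompleteNormedModule) f1 f2). reflexivity.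
  all: apply ct_exRInt; repeat apply ct_plus; auto.
Qed.

Lemma conv_rep w psi k : summable w -> ctC psi ->
  zis (fun j => w j * rep psi (k - j)) (rep (fun t => Cmult (psi t) (hat w t)) k).
Proof.
  intros Hw Hpsi. assert (Hw' := Hw). destruct Hw' as [H1 H2].
  assert (P := conv_rep_nat (zpos w) (fun n => Z.of_nat n) psi k H1 Hpsi).
  assert (N := conv_rep_nat (zneg w) (fun n => (- Z.of_nat (S n))%Z) psi k H2 Hpsi).
  eexists _, _. split; [exact P|]. split; [exact N|].
  destruct Hpsi as [Hp Hq].
  set (u := fun t => fst (psi t) * cos (IZR k * t) + snd (psi t) * sin (IZR k * t)).
  set (v := fun t => fst (psi t) * sin (IZR k * t) - snd (psi t) * cos (IZR k * t)).
  assert (Cu : continuity u). { apply ct_plus; apply ct_mult; auto. apply ct_cos. apply ct_sin. }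
  assert (Cv : continuity v). { apply ct_minus; apply ct_mult; auto. apply ct_sin. apply ct_cos. }
  set (Spc := fun t => Series (fun n => zpos w n * cos (IZR (Z.of_nat n) * t))).
  set (Sps := fun t => Series (fun n => zpos w n * sin (IZR (Z.of_nat n) * t))).
  set (Snc := fun t => Series (fun n => zneg w n * cos (IZR (- Z.of_nat (S n)) * t))).
  set (Sns := fun t => Series (fun n => zneg w n * sin (IZR (- Z.of_nat (S n)) * t))).
  assert (C1 : continuity Spc) by (apply ct_series_idx; auto; [exact continuity_cos | exact abs_cos_le1]).
  assert (C2 : continuity Sps) by (apply ct_series_idx; auto; [exact continuity_sin | exact abs_sin_le1]).
  assert (C3 : continuity Snc) by (apply ct_series_idx; auto; [exact continuity_cos | exact abs_cos_le1]).
  assert (C4 : continuity Sns) by (apply ct_series_idx; auto; [exact continuity_sin | exact abs_sin_le1]).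
  unfold rep.
  rewrite (RInt_ext _ (fun t => u t * Spc t + v t * Sps t + u t * Snc t + v t * Sns t)).
  2: { intros t _. unfold u, v, Spc, Sps, Snc, Sns, hat, hatc, hats, zsum, zpos, zneg. simpl. ring. }
  rewrite RInt_plus4; try (apply ct_mult; auto).
  unfold u, v, Spc, Sps, Snc, Sns. match goal with |- ?a = ?b => change (@eq R a b) end. ring.
Qed.


Lemma ctC_plus f g : ctC f -> ctC g -> ctC (fun t => Cplus (f t) (g t)).
Proof. intros [F1 F2] [G1 G2]. split; simpl; apply ct_plus; auto. Qed.
Lemma ctC_mult f g : ctC f -> ctC g -> ctC (fun t => Cmult (f t) (g t)).
Proof. intros [F1 F2] [G1 G2]. split; simpl. apply ct_minus; apply ct_mult; auto.
  apply ct_plus; apply ct_mult; auto. Qed.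
Lemma ctC_const c : ctC (fun _ => c).
Proof. split; apply ct_const. Qed.

Lemma rep_plus f g k : ctC f -> ctC g -> rep (fun t => Cplus (f t) (g t)) k = rep f k + rep g k.
Proof.
  intros [F1 F2] [G1 G2]. unfold rep. rewrite <- Rmult_plus_distr_l. f_equal.
  rewrite <- (RInt_plus (V := R_CompleteNormedModule)).
  apply RInt_ext. intros. simpl. unfold plus; simpl. ring.
  apply ct_exRInt. apply ct_plus; apply ct_mult; auto. apply ct_cos. apply ct_sin.
  apply ct_exRInt. apply ct_plus; apply ct_mult; auto. apply ct_cos. apply ct_sin.
Qed.

Lemma rep_scal c f k : ctC f -> rep (fun t => Cmult (RtoC c) (f t)) k = c * rep f k.
Proof.
  intros [F1 F2]. unfold rep.
  rewrite (RInt_ext _ (fun t => scal c (fst (f t) * cos (IZR k * t) + snd (f t) * sin (IZR k * t)))).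
  rewrite (RInt_scal (V := R_CompleteNormedModule)). unfold scal; simpl; unfold mult; simpl. ring.
  apply ct_exRInt. apply ct_plus; apply ct_mult; auto. apply ct_cos. apply ct_sin.
  intros. unfold RtoC. simpl. unfold scal; simpl; unfold mult; simpl. ring.
Qed.

Lemma rep_zero k : rep (fun _ => (0,0)) k = 0.
Proof.
  unfold rep. rewrite (RInt_ext _ (fun _ => 0)). rewrite RInt_const. unfold scal; simpl; unfold mult; simpl. ring.
  intros. simpl. ring.
Qed.

Lemma int_cos k : RInt (fun t => cos (IZR k * t)) (- PI) PI = if Z.eq_dec k 0 then 2 * PI else 0.
Proof.
  destruct (Z.eq_dec k 0).
  - subst. rewrite (RInt_ext _ (fun _ => 1)). rewrite RInt_const. unfold scal; simpl; unfold mult; simpl. ring.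
    intros. rewrite Rmult_0_l. apply cos_0.
  - assert (Hk : IZR k <> 0) by (apply not_0_IZR; auto).
    assert (H := is_RInt_derive (V := R_CompleteNormedModule) (fun t => sin (IZR k * t) / IZR k) (fun t => cos (IZR k * t)) (- PI) PI).
    assert (D1 : forall x : R, Rmin (- PI) PI <= x <= Rmax (- PI) PI ->
       is_derive (fun t : R => sin (IZR k * t) / IZR k) x (cos (IZR k * x))).
    { intros x _. auto_derive. auto. field. auto. }
    assert (D2 : forall x : R, Rmin (- PI) PI <= x <= Rmax (- PI) PI ->
       continuous (fun t : R => cos (IZR k * t)) x).
    { intros x _. apply continuity_pt_filterlim. apply ct_cos. }
    rewrite (is_RInt_unique _ _ _ _ (H D1 D2)).
    unfold minus, plus, opp; simpl.
    rewrite !sin_eq_0_1. field. auto. exists (- k)%Z. rewrite opp_IZR. ring. exists k. ring.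
Qed.

Lemma rep_delta k : rep (fun _ => (1,0)) k = delta 0 k.
Proof.
  unfold rep. rewrite (RInt_ext _ (fun t => cos (IZR k * t))). rewrite int_cos.
  unfold delta. assert (0 < PI) by apply PI_RGT_0. destruct (Z.eq_dec k 0); field; lra.
  intros. simpl. ring.
Qed.

Lemma zsum_ext f g : (forall k, f k = g k) -> zsum f = zsum g.
Proof. intros H. unfold zsum. f_equal; apply Series_ext; intro; unfold zpos, zneg; apply H. Qed.

Lemma zis_unique f l1 l2 : zis f l1 -> zis f l2 -> l1 = l2.
Proof. intros H1 H2. rewrite <- (zis_zsum _ _ H1). now apply zis_zsum. Qed.

Fixpoint Af (G : Z -> R) (n : nat) : R -> C :=
  match n with O => fun _ => (1,0) | S n => fun t => Cmult (Af G n t) (hat G t) end.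
Fixpoint Bf (G G1 : Z -> R) (n : nat) : R -> C :=
  match n with O => fun _ => (0,0)
  | S n => fun t => Cplus (Cmult (Af G n t) (hat G1 t)) (Cmult (Bf G G1 n t) (hat G t)) end.
Fixpoint Cf (G G1 G2 : Z -> R) (n : nat) : R -> C :=
  match n with O => fun _ => (0,0)
  | S n => fun t => Cplus (Cplus (Cmult (Af G n t) (hat G2 t)) (Cmult (RtoC 2) (Cmult (Bf G G1 n t) (hat G1 t))))
                          (Cmult (Cf G G1 G2 n t) (hat G t)) end.

Lemma ctA G n : summable G -> ctC (Af G n).
Proof. intros. induction n; simpl. apply ctC_const. apply ctC_mult; auto. apply ct_hat; auto. Qed.
Lemma ctB G G1 n : summable G -> summable G1 -> ctC (Bf G G1 n).
Proof. intros. induction n; simpl. apply ctC_const. apply ctC_plus; apply ctC_mult; auto; try apply ct_hat; auto. now apply ctA. Qed.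
Lemma ctCf G G1 G2 n : summable G -> summable G1 -> summable G2 -> ctC (Cf G G1 G2 n).
Proof. intros. induction n; simpl. apply ctC_const.
  apply ctC_plus; [apply ctC_plus|]; apply ctC_mult; auto; try apply ct_hat; auto. now apply ctA.
  apply ctC_const. apply ctC_mult. now apply ctB. now apply ct_hat. Qed.

Lemma repA G n k : summable G -> convpow G n k = rep (Af G n) k.
Proof.
  intros HG. revert k. induction n; intro k.
  - simpl. now rewrite rep_delta.
  - simpl. unfold conv. rewrite (zsum_ext _ (fun j => G j * rep (Af G n) (k - j))).
    apply zis_zsum. apply conv_rep; auto. now apply ctA.
    intro j. now rewrite IHn.
Qed.

Lemma repB G m n k : summable G -> summable (fun j => (IZR j - m) * G j) ->
  (IZR k - INR n * m) * convpow G n k = rep (Bf G (fun j => (IZR j - m) * G j) n) k.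
Proof.
  intros HG HG1. set (G1 := fun j => (IZR j - m) * G j). revert k. induction n; intro k.
  - simpl. rewrite rep_zero. unfold delta. destruct (Z.eq_dec k 0). subst. simpl. ring. ring.
  - rewrite (repA G (S n) k HG).
    assert (Z1 := conv_rep G (Af G n) k HG (ctA G n HG)).
    apply (zis_scal (IZR k - INR (S n) * m)) in Z1.
    assert (Z2 := conv_rep G1 (Af G n) k HG1 (ctA G n HG)).
    assert (Z3 := conv_rep G (Bf G G1 n) k HG (ctB G G1 n HG HG1)).
    assert (Z4 := zis_plus _ _ _ _ Z2 Z3).
    simpl. rewrite rep_plus.
    2,3: apply ctC_mult; [first [apply ctA | apply ctB]; auto | apply ct_hat; auto].
    eapply zis_unique; [exact Z1|]. eapply zis_ext; [|exact Z4].
    intro j. cbv beta. rewrite S_INR. rewrite <- IHn, <- repA by auto. unfold G1. rewrite minus_IZR. match goal with |- ?a = ?b => change (@eq R a b) end. ring.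
Qed.

Lemma repC G m n k : summable G -> summable (fun j => (IZR j - m) * G j) ->
  summable (fun j => (IZR j - m) ^ 2 * G j) ->
  (IZR k - INR n * m) ^ 2 * convpow G n k =
    rep (Cf G (fun j => (IZR j - m) * G j) (fun j => (IZR j - m) ^ 2 * G j) n) k.
Proof.
  intros HG HG1 HG2. set (G1 := fun j => (IZR j - m) * G j).
  set (G2 := fun j => (IZR j - m) ^ 2 * G j). revert k. induction n; intro k.
  - simpl. rewrite rep_zero. unfold delta. destruct (Z.eq_dec k 0). subst. simpl. ring. ring.
  - rewrite (repA G (S n) k HG).
    assert (Z1 := conv_rep G (Af G n) k HG (ctA G n HG)).
    apply (zis_scal ((IZR k - INR (S n) * m) ^ 2)) in Z1.
    assert (Z2 := conv_rep G2 (Af G n) k HG2 (ctA G n HG)).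
    assert (Z3 := conv_rep G1 (Bf G G1 n) k HG1 (ctB G G1 n HG HG1)).
    apply (zis_scal 2) in Z3.
    assert (Z4 := conv_rep G (Cf G G1 G2 n) k HG (ctCf G G1 G2 n HG HG1 HG2)).
    assert (Z5 := zis_plus _ _ _ _ (zis_plus _ _ _ _ Z2 Z3) Z4).
    simpl. rewrite rep_plus, rep_plus, rep_scal.
    2: apply ctC_mult; [apply ctB; auto | apply ct_hat; auto].
    2: apply ctC_mult; [apply ctA; auto | apply ct_hat; auto].
    2: apply ctC_mult; [apply ctC_const | apply ctC_mult; [apply ctB; auto | apply ct_hat; auto]].
    2: apply ctC_plus; apply ctC_mult; [apply ctA; auto | apply ct_hat; auto | apply ctC_const | apply ctC_mult; [apply ctB; auto | apply ct_hat; auto]].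
    2: apply ctC_mult; [apply ctCf; auto | apply ct_hat; auto].
    eapply zis_unique; [exact Z1|]. eapply zis_ext; [|exact Z5].
    intro j. cbv beta. rewrite S_INR. unfold G1, G2 in *. rewrite <- IHn, <- repB, <- repA by auto. rewrite minus_IZR. match goal with |- ?a = ?b => change (@eq R a b) end. ring.
Qed.


Lemma PI_gt3 : 3 < PI. Proof. assert (H := PI2_3_2). lra. Qed.

Lemma abs_sin_le_pos x : 0 < x -> Rabs (sin x) <= x.
Proof.
  intros Hx. assert (sin x < x) by (apply sin_lt_x; lra).
  assert (H2 := SIN_bound x). destruct (Rle_dec 1 x).
  - apply Rabs_le. lra.
  - assert (0 <= sin x) by (apply sin_ge_0; assert (H3 := PI_gt3); lra).
    rewrite Rabs_pos_eq; lra.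
Qed.

Lemma abs_sin_le x : Rabs (sin x) <= Rabs x.
Proof.
  destruct (Rtotal_order x 0) as [H|[H|H]].
  - assert (H' := abs_sin_le_pos (-x)). rewrite sin_neg, Rabs_Ropp in H'.
    rewrite (Rabs_left x) by lra. apply H'. lra.
  - subst. rewrite sin_0, Rabs_R0. lra.
  - rewrite (Rabs_pos_eq x) by lra. now apply abs_sin_le_pos.
Qed.

Lemma one_minus_cos x : 1 - cos x = 2 * sin (x / 2) ^ 2.
Proof. replace x with (2 * (x / 2)) at 1 by field. rewrite cos_2a_sin. ring. Qed.

Lemma abs_cos_m1 x : Rabs (cos x - 1) <= Rabs x.
Proof.
  replace (cos x - 1) with (- (1 - cos x)) by ring. rewrite Rabs_Ropp, one_minus_cos.
  assert (H1 := abs_sin_le (x / 2)). assert (H2 := abs_sin_le1 (x / 2)).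
  rewrite Rabs_mult, Rabs_pos_eq by lra. rewrite <- RPow_abs.
  assert (Rabs (x / 2) = Rabs x / 2). { unfold Rdiv. rewrite Rabs_mult, Rabs_inv, (Rabs_pos_eq 2) by lra. auto. }
  assert (0 <= Rabs (sin (x / 2))) by apply Rabs_pos. nra.
Qed.

Lemma one_minus_cos_le x : 1 - cos x <= x ^ 2 / 2.
Proof.
  rewrite one_minus_cos. assert (H1 := abs_sin_le (x / 2)).
  assert (sin (x/2) ^ 2 <= (x/2) ^ 2).
  { rewrite <- (pow2_abs (sin _)), <- (pow2_abs (x/2)). apply pow_incr. split; auto. apply Rabs_pos. }
  nra.
Qed.

Lemma summable_nonneg_zis g : summable g -> zis g (zsum g).
Proof. apply summable_zis. Qed.

Lemma zsum_abs_le f g : summable g -> (forall k, Rabs (f k) <= g k) -> Rabs (zsum f) <= zsum g.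
Proof.
  intros Hg Hfg. assert (Hf : summable f) by (eapply summable_le; eauto).
  assert (Zf := summable_zis f Hf). assert (Zg := summable_zis g Hg).
  assert (Zg' := zis_scal (-1) _ _ Zg).
  apply Rabs_le. split.
  - replace (- zsum g) with (-1 * zsum g) by ring. eapply zis_le; [exact Zg'|exact Zf|].
    intro k. specialize (Hfg k). apply Rabs_le_between in Hfg. lra.
  - eapply zis_le; [exact Zf|exact Zg|]. intro k. specialize (Hfg k). apply Rabs_le_between in Hfg. lra.
Qed.

Lemma summable_scal c f : summable f -> summable (fun k => c * f k).
Proof.
  intros Hf. apply summable_le with (fun k => Rabs c * Rabs (f k)).
  intro k. rewrite Rabs_mult. lra.
  destruct (summable_abs f Hf) as [H1 H2]. split.
  - apply ex_series_ext with (fun n => Rabs c * Rabs (zpos (fun k => Rabs (f k)) n)).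
    intro n. unfold zpos. rewrite Rabs_mult, Rabs_Rabsolu, !Rabs_Rabsolu. auto.
    apply (ex_series_scal_l (V := R_NormedModule)). auto.
  - apply ex_series_ext with (fun n => Rabs c * Rabs (zneg (fun k => Rabs (f k)) n)).
    intro n. unfold zneg. rewrite Rabs_mult, Rabs_Rabsolu, !Rabs_Rabsolu. auto.
    apply (ex_series_scal_l (V := R_NormedModule)). auto.
Qed.

Lemma Cmod_le_sum z : Cmod z <= Rabs (fst z) + Rabs (snd z).
Proof.
  unfold Cmod. apply Rsqr_incr_0_var. rewrite Rsqr_sqrt.
  unfold Rsqr. rewrite <- (pow2_abs (fst z)), <- (pow2_abs (snd z)).
  assert (0 <= Rabs (fst z)) by apply Rabs_pos. assert (0 <= Rabs (snd z)) by apply Rabs_pos. nra.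
  nra. assert (0 <= Rabs (fst z)) by apply Rabs_pos. assert (0 <= Rabs (snd z)) by apply Rabs_pos. lra.
Qed.

Lemma rep_bound psi h k : ctC psi -> continuity h ->
  (forall t, - PI <= t <= PI -> Cmod (psi t) <= h t) ->
  Rabs (rep psi k) <= / (2 * PI) * RInt h (- PI) PI.
Proof.
  intros [Hp Hq] Ch Hb. unfold rep. assert (HPI := PI_RGT_0).
  rewrite Rabs_mult, Rabs_pos_eq by (apply Rlt_le, Rinv_0_lt_compat; lra).
  apply Rmult_le_compat_l. apply Rlt_le, Rinv_0_lt_compat; lra.
  eapply Rle_trans. apply abs_RInt_le. lra.
  apply ct_exRInt. apply ct_plus; apply ct_mult; auto. apply ct_cos. apply ct_sin.
  apply RInt_le. lra.
  apply ct_exRInt. apply ct_abs. apply ct_plus; apply ct_mult; auto. apply ct_cos. apply ct_sin.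
  apply ct_exRInt; auto.
  intros t Ht. eapply Rle_trans; [|apply Hb; lra].
  unfold Cmod. apply Rsqr_incr_0_var. rewrite Rsqr_sqrt. rewrite <- Rsqr_abs.
  set (p := fst (psi t)). set (q := snd (psi t)). set (c := cos (IZR k * t)). set (s := sin (IZR k * t)).
  assert (c * c + s * s = 1). { unfold c, s. rewrite <- (sin2_cos2 (IZR k * t)). unfold Rsqr. ring. }
  unfold Rsqr. assert (0 <= (p * s - q * c) ^ 2) by apply pow2_ge_0.
  assert ((p * c + q * s) * (p * c + q * s) + (p * s - q * c) ^ 2 = (p ^ 2 + q ^ 2) * (c * c + s * s)) by ring.
  nra. nra. apply sqrt_pos.
Qed.


Lemma pow_pred_mult r n : INR n * r ^ Nat.pred n * r = INR n * r ^ n.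
Proof. destruct n. simpl. ring. simpl. ring. Qed.
Lemma pow_pred2_mult r n : INR n * (INR n - 1) * r ^ (n - 2) * r = INR n * (INR n - 1) * r ^ Nat.pred n.
Proof. destruct n. simpl. ring. destruct n. simpl. ring. replace (S (S n) - 2)%nat with n by lia. simpl. ring. Qed.

Lemma Cmod_RtoC2 z : Cmod (Cmult (RtoC 2) z) = 2 * Cmod z.
Proof. rewrite Cmod_mult. rewrite Cmod_R. rewrite Rabs_pos_eq by lra. auto. Qed.

Lemma ABC_bounds G G1 G2 t r s M :
  Cmod (hat G t) <= r -> Cmod (hat G1 t) <= s -> Cmod (hat G2 t) <= M -> 0 <= r -> 0 <= s ->
  forall n, Cmod (Af G n t) <= r ^ n /\
            Cmod (Bf G G1 n t) <= INR n * s * r ^ Nat.pred n /\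
            Cmod (Cf G G1 G2 n t) <= INR n * M * r ^ Nat.pred n + INR n * (INR n - 1) * s ^ 2 * r ^ (n - 2).
Proof.
  intros Hr Hs HM r0 s0 n. assert (M0 : 0 <= M) by (eapply Rle_trans; [apply Cmod_ge_0|eauto]).
  induction n as [|n [IA [IB IC]]].
  - simpl Af; simpl Bf; simpl Cf. unfold Cmod; simpl fst; simpl snd.
    replace (1 ^ 2 + 0 ^ 2) with 1 by ring. replace (0 ^ 2 + 0 ^ 2) with 0 by ring.
    rewrite sqrt_1, sqrt_0. simpl. lra.
  - assert (0 <= r ^ n) by (apply pow_le; auto).
    assert (0 <= r ^ Nat.pred n) by (apply pow_le; auto).
    assert (0 <= r ^ (n - 2)) by (apply pow_le; auto).
    assert (0 <= INR n) by apply pos_INR.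
    assert (Hn1 : 0 <= INR n * (INR n - 1)). { destruct n. simpl. lra. rewrite S_INR. assert (0 <= INR n) by apply pos_INR. nra. }
    assert (0 <= Cmod (hat G t)) by apply Cmod_ge_0.
    assert (0 <= Cmod (hat G1 t)) by apply Cmod_ge_0.
    assert (0 <= Cmod (hat G2 t)) by apply Cmod_ge_0.
    assert (0 <= Cmod (Af G n t)) by apply Cmod_ge_0.
    assert (0 <= Cmod (Bf G G1 n t)) by apply Cmod_ge_0.
    assert (0 <= Cmod (Cf G G1 G2 n t)) by apply Cmod_ge_0.
    simpl Af; simpl Bf; simpl Cf. rewrite S_INR. split; [|split].
    + rewrite Cmod_mult. simpl. rewrite Rmult_comm. apply Rmult_le_compat; auto.
    + eapply Rle_trans. apply Cmod_triangle. rewrite !Cmod_mult.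
      replace ((INR n + 1) * s * r ^ Nat.pred (S n)) with (r ^ n * s + INR n * s * r ^ Nat.pred n * r).
      apply Rplus_le_compat; apply Rmult_le_compat; auto.
      simpl Nat.pred. replace (INR n * s * r ^ Nat.pred n * r) with (s * (INR n * r ^ Nat.pred n * r)) by ring.
      rewrite pow_pred_mult. ring.
    + eapply Rle_trans. apply Cmod_triangle. eapply Rle_trans. apply Rplus_le_compat_r. apply Cmod_triangle.
      rewrite !Cmod_mult, Cmod_R, (Rabs_pos_eq 2) by lra.
      apply Rle_trans with (r ^ n * M + 2 * (INR n * s * r ^ Nat.pred n * s) +
          (INR n * M * r ^ Nat.pred n + INR n * (INR n - 1) * s ^ 2 * r ^ (n - 2)) * r).
      * assert (T1 : Cmod (Af G n t) * Cmod (hat G2 t) <= r ^ n * M) by (apply Rmult_le_compat; auto).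
        assert (T2 : Cmod (Bf G G1 n t) * Cmod (hat G1 t) <= INR n * s * r ^ Nat.pred n * s) by (apply Rmult_le_compat; auto).
        assert (T3 : Cmod (Cf G G1 G2 n t) * Cmod (hat G t) <= (INR n * M * r ^ Nat.pred n + INR n * (INR n - 1) * s ^ 2 * r ^ (n - 2)) * r) by (apply Rmult_le_compat; auto).
        lra.
      * simpl Nat.pred. replace (S n - 2)%nat with (Nat.pred n) by lia.
        assert (E1 := pow_pred2_mult r n). assert (E2 := pow_pred_mult r n).
        replace ((INR n * M * r ^ Nat.pred n + INR n * (INR n - 1) * s ^ 2 * r ^ (n - 2)) * r)
          with (M * (INR n * r ^ Nat.pred n * r) + s ^ 2 * (INR n * (INR n - 1) * r ^ (n - 2) * r)) by ring.
        rewrite E1, E2. right. ring.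
Qed.


Lemma abs_le_1sq x : Rabs x <= 1 + x ^ 2.
Proof. rewrite <- (pow2_abs x). assert (0 <= (Rabs x - 1) ^ 2) by apply pow2_ge_0. assert (0 <= Rabs x) by apply Rabs_pos. nra. Qed.

Lemma zsum_scal c f : summable f -> zsum (fun k => c * f k) = c * zsum f.
Proof. intros Hf. apply zis_zsum. apply zis_scal. now apply summable_zis. Qed.

Definition Wt (G : Z -> R) := fun j => (1 + IZR j ^ 2) * Rabs (G j).

Lemma Wt_nonneg G j : 0 <= Wt G j.
Proof. unfold Wt. apply Rmult_le_pos. assert (0 <= IZR j ^ 2) by apply pow2_ge_0. lra. apply Rabs_pos. Qed.

Lemma sum_G G : summable (Wt G) -> summable G.
Proof. intros H. apply summable_le with (Wt G); auto. intro j. unfold Wt.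
  assert (0 <= IZR j ^ 2) by apply pow2_ge_0. assert (0 <= Rabs (G j)) by apply Rabs_pos. nra. Qed.

Lemma sum_jG G : summable (Wt G) -> summable (fun j => IZR j * G j).
Proof. intros H. apply summable_le with (Wt G); auto. intro j. unfold Wt. rewrite Rabs_mult.
  assert (H1 := abs_le_1sq (IZR j)). assert (0 <= Rabs (G j)) by apply Rabs_pos. nra. Qed.

Lemma sum_G1 G m : summable (Wt G) -> summable (fun j => (IZR j - m) * G j).
Proof. intros H. apply summable_le with (fun j => (Rabs m + 1) * Wt G j); [|apply summable_scal; auto].
  intro j. unfold Wt. rewrite Rabs_mult.
  assert (H1 := abs_le_1sq (IZR j)). assert (0 <= Rabs (G j)) by apply Rabs_pos.
  assert (H2 := Rabs_triang (IZR j) (- m)). rewrite Rabs_Ropp in H2.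
  assert (0 <= Rabs m) by apply Rabs_pos. assert (0 <= IZR j ^ 2) by apply pow2_ge_0.
  assert (Rabs (IZR j - m) <= (Rabs m + 1) * (1 + IZR j ^ 2)) by (unfold Rminus; nra). nra. Qed.

Lemma sum_G2 G m : summable (Wt G) -> summable (fun j => (IZR j - m) ^ 2 * Rabs (G j)).
Proof. intros H. apply summable_le with (fun j => (2 * (1 + m ^ 2)) * Wt G j); [|apply summable_scal; auto].
  intro j. unfold Wt. rewrite Rabs_mult. rewrite (Rabs_pos_eq (_ ^ 2)) by apply pow2_ge_0. rewrite Rabs_Rabsolu.
  assert (0 <= Rabs (G j)) by apply Rabs_pos. assert (0 <= (IZR j + m) ^ 2) by apply pow2_ge_0.
  assert (0 <= IZR j ^ 2) by apply pow2_ge_0. assert (0 <= m ^ 2) by apply pow2_ge_0.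
  assert ((IZR j - m) ^ 2 <= 2 * (1 + m ^ 2) * (1 + IZR j ^ 2)) by nra. nra. Qed.

Lemma sum_G2' G m : summable (Wt G) -> summable (fun j => (IZR j - m) ^ 2 * G j).
Proof. intros H. apply summable_le with (fun j => (IZR j - m) ^ 2 * Rabs (G j)); [|apply sum_G2; auto].
  intro j. rewrite Rabs_mult, (Rabs_pos_eq (_ ^ 2)) by apply pow2_ge_0. lra. Qed.

Lemma abs_mul_le1 a b : Rabs b <= 1 -> Rabs (a * b) <= Rabs a.
Proof. intros H. rewrite Rabs_mult. assert (0 <= Rabs a) by apply Rabs_pos. nra. Qed.

Lemma abs_sq_G x g : Rabs (x ^ 2 * g) = x ^ 2 * Rabs g.
Proof. rewrite Rabs_mult, Rabs_pos_eq by apply pow2_ge_0. auto. Qed.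

Lemma hatG2_bound G m t : summable (Wt G) ->
  Cmod (hat (fun j => (IZR j - m) ^ 2 * G j) t) <= 2 * zsum (fun j => (IZR j - m) ^ 2 * Rabs (G j)).
Proof.
  intros H. eapply Rle_trans. apply Cmod_le_sum. unfold hat; cbn [fst snd]. unfold hatc, hats.
  assert (A1 : Rabs (zsum (fun j => (IZR j - m) ^ 2 * G j * cos (IZR j * t))) <= zsum (fun j => (IZR j - m) ^ 2 * Rabs (G j))).
  { apply zsum_abs_le. apply sum_G2; auto. intro j. rewrite <- abs_sq_G. apply abs_mul_le1, abs_cos_le1. }
  assert (A2 : Rabs (zsum (fun j => (IZR j - m) ^ 2 * G j * sin (IZR j * t))) <= zsum (fun j => (IZR j - m) ^ 2 * Rabs (G j))).
  { apply zsum_abs_le. apply sum_G2; auto. intro j. rewrite <- abs_sq_G. apply abs_mul_le1, abs_sin_le1. }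
  lra.
Qed.

Lemma hatG1_bound G m t : summable (Wt G) -> zsum G = 1 -> m = zsum (fun j => IZR j * G j) ->
  Cmod (hat (fun j => (IZR j - m) * G j) t) <= 2 * ((Rabs m + 1) * zsum (Wt G)) * Rabs t.
Proof.
  intros H HG1 Hm. eapply Rle_trans. apply Cmod_le_sum. unfold hat; cbn [fst snd]. unfold hatc, hats.
  set (K := (Rabs m + 1) * zsum (Wt G)).
  assert (KW : forall j, Rabs ((IZR j - m) * G j) * Rabs (IZR j) <= (Rabs m + 1) * Wt G j).
  { intro j. unfold Wt. rewrite Rabs_mult.
    assert (H2 := Rabs_triang (IZR j) (- m)). rewrite Rabs_Ropp in H2.
    assert (0 <= Rabs m) by apply Rabs_pos. assert (0 <= IZR j ^ 2) by apply pow2_ge_0.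
    assert (0 <= Rabs (G j)) by apply Rabs_pos. assert (0 <= Rabs (IZR j)) by apply Rabs_pos.
    rewrite <- (pow2_abs (IZR j)) in *.
    assert (Hx := abs_le_1sq (Rabs (IZR j))). rewrite Rabs_Rabsolu in Hx.
    assert (Hz : Rabs (IZR j - m) <= Rabs (IZR j) + Rabs m) by (unfold Rminus; lra).
    assert (Rabs (IZR j - m) * Rabs (IZR j) <= (Rabs (IZR j) + Rabs m) * Rabs (IZR j)) by (apply Rmult_le_compat_r; auto).
    assert (Rabs m * Rabs (IZR j) <= Rabs m * (1 + Rabs (IZR j) ^ 2)) by (apply Rmult_le_compat_l; auto).
    assert (Rabs (IZR j - m) * Rabs (IZR j) <= (Rabs m + 1) * (1 + Rabs (IZR j) ^ 2)) by nra.
    nra. }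
  assert (SK : summable (fun j => Rabs t * ((Rabs m + 1) * Wt G j))).
  { apply summable_scal. apply summable_scal. auto. }
  assert (EK : zsum (fun j => Rabs t * ((Rabs m + 1) * Wt G j)) = Rabs t * K).
  { rewrite zsum_scal, zsum_scal; auto. apply summable_scal; auto. }
  assert (A2 : Rabs (zsum (fun j => (IZR j - m) * G j * sin (IZR j * t))) <= Rabs t * K).
  { rewrite <- EK. apply zsum_abs_le; auto. intro j. rewrite Rabs_mult.
    assert (H1 := abs_sin_le (IZR j * t)). rewrite Rabs_mult in H1. specialize (KW j).
    assert (0 <= Rabs ((IZR j - m) * G j)) by apply Rabs_pos. assert (0 <= Rabs t) by apply Rabs_pos.
    nra. }
  assert (Z0 : zsum (fun j => (IZR j - m) * G j) = 0).
  { rewrite (zsum_ext _ (fun j => IZR j * G j + (- m) * G j)) by (intro; ring).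
    apply zis_zsum. replace 0 with (m + - m * 1) by ring.
    apply zis_plus. rewrite Hm. apply summable_zis, sum_jG; auto.
    rewrite <- HG1. apply zis_scal. apply summable_zis, sum_G; auto. }
  assert (A1 : Rabs (zsum (fun j => (IZR j - m) * G j * cos (IZR j * t))) <= Rabs t * K).
  { assert (E : zsum (fun j => (IZR j - m) * G j * cos (IZR j * t)) =
                zsum (fun j => (IZR j - m) * G j * (cos (IZR j * t) - 1))).
    { apply eq_trans with (zsum (fun j => (IZR j - m) * G j * (cos (IZR j * t) - 1)) + zsum (fun j => (IZR j - m) * G j)).
      2: rewrite Z0; ring.
      apply zis_zsum. eapply zis_ext; [|apply zis_plus; apply summable_zis].
      intro j. simpl. ring.
      apply summable_le with (fun j => 2 * Rabs ((IZR j - m) * G j)).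
      intro j. rewrite Rabs_mult. assert (H1 := abs_cos_le1 (IZR j * t)).
      assert (Rabs (cos (IZR j * t) - 1) <= 2) by (eapply Rle_trans; [apply Rabs_triang|]; rewrite Rabs_Ropp, Rabs_R1; lra).
      assert (0 <= Rabs ((IZR j - m) * G j)) by apply Rabs_pos. nra.
      apply summable_scal, summable_abs, sum_G1; auto.
      apply sum_G1; auto. }
    rewrite E, <- EK. apply zsum_abs_le; auto. intro j. rewrite Rabs_mult.
    assert (H1 := abs_cos_m1 (IZR j * t)). rewrite Rabs_mult in H1. specialize (KW j).
    assert (0 <= Rabs ((IZR j - m) * G j)) by apply Rabs_pos. assert (0 <= Rabs t) by apply Rabs_pos.
    nra. }
  fold K. lra.
Qed.


Lemma conv_delta_val m F j : conv (delta m) F j = F (j - m)%Z.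
Proof.
  unfold conv. apply zis_zsum.
  replace (F (j - m)%Z) with (delta m m * F (j - m)%Z).
  apply (zis_single (fun k => delta m k * F (j - k)%Z) m). intros k Hk. unfold delta. destruct (Z.eq_dec k m). contradiction. ring.
  unfold delta. destruct (Z.eq_dec m m). ring. contradiction.
Qed.

Definition lsum (r : Z) (l : list (Z * Z)) : Z := fold_right (fun p acc => (fst p * (snd p - r) + acc)%Z) 0%Z l.

Lemma bezout_list F r : aperiodic F -> F r <> 0 ->
  exists l : list (Z * Z), (forall p, In p l -> F (snd p) <> 0) /\ lsum r l = 1%Z.
Proof.
  intros Hap Hr.
  set (H := fun z => exists l : list (Z * Z), (forall p, In p l -> F (snd p) <> 0) /\ lsum r l = z).
  assert (HZ : forall z, H z).
  { apply (Hap (- r)%Z H).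
    - exists nil. split. intros p []. reflexivity.
    - intros a b [la [Ha1 Ha2]] [lb [Hb1 Hb2]].
      exists (la ++ map (fun p => (- fst p, snd p)%Z) lb). split.
      + intros p Hp. apply in_app_or in Hp. destruct Hp as [Hp|Hp]. auto.
        apply in_map_iff in Hp. destruct Hp as [q [<- Hq]]. simpl. auto.
      + subst. clear. induction la; simpl.
        * induction lb; simpl. reflexivity. rewrite IHlb. lia.
        * rewrite IHla. lia.
    - intros x Hx. unfold supp in Hx. rewrite conv_delta_val in Hx.
      exists ((1, x - - r)%Z :: nil). split.
      + intros p [<-|[]]. simpl. auto.
      + unfold lsum. cbn [fold_right fst snd]. lia. }
  apply HZ.
Qed.

Lemma exists_nonzero F : zsum F = 1 -> exists r, F r <> 0.
Proof.
  intros H. destruct (Classical_Prop.classic (exists r, F r <> 0)) as [E|E]; auto.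
  exfalso. assert (forall r, F r = 0). { intro r. destruct (Req_dec (F r) 0); auto. exfalso. apply E. eauto. }
  rewrite (zsum_ext _ (fun _ => 0)) in H by auto.
  assert (Z0 : zis (fun _ : Z => 0) 0) by (apply (zis_single (fun _ => 0) 0%Z); auto).
  rewrite (zis_zsum _ _ Z0) in H. lra.
Qed.

Lemma abs_sin_plus a b : Rabs (sin (a + b)) <= Rabs (sin a) + Rabs (sin b).
Proof.
  rewrite sin_plus. eapply Rle_trans. apply Rabs_triang. rewrite !Rabs_mult.
  assert (H1 := abs_cos_le1 a). assert (H2 := abs_cos_le1 b).
  assert (0 <= Rabs (sin a)) by apply Rabs_pos. assert (0 <= Rabs (sin b)) by apply Rabs_pos. nra.
Qed.

Lemma abs_sin_nat (n : nat) y : Rabs (sin (INR n * y)) <= INR n * Rabs (sin y).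
Proof.
  induction n. simpl. rewrite Rmult_0_l, sin_0, Rabs_R0. lra.
  rewrite S_INR. replace ((INR n + 1) * y) with (INR n * y + y) by ring.
  eapply Rle_trans. apply abs_sin_plus. lra.
Qed.

Lemma abs_sin_int (u : Z) y : Rabs (sin (IZR u * y)) <= Rabs (IZR u) * Rabs (sin y).
Proof.
  destruct (Z_le_gt_dec 0 u).
  - rewrite <- (Z2Nat.id u) by auto. rewrite <- INR_IZR_INZ. rewrite (Rabs_pos_eq (INR _)) by apply pos_INR. apply abs_sin_nat.
  - replace (IZR u * y) with (- (IZR (- u) * y)) by (rewrite opp_IZR; ring).
    rewrite sin_neg, Rabs_Ropp. replace (Rabs (IZR u)) with (IZR (- u)).
    rewrite <- (Z2Nat.id (- u)) by lia. rewrite <- INR_IZR_INZ. apply abs_sin_nat.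
    rewrite opp_IZR, Rabs_left; auto. apply IZR_lt. lia.
Qed.

Definition labs (l : list (Z * Z)) : R := fold_right (fun p acc => Rabs (IZR (fst p)) + acc) 0 l.

Lemma labs_nonneg l : 0 <= labs l.
Proof. induction l; simpl. lra. assert (0 <= Rabs (IZR (fst a))) by apply Rabs_pos. lra. Qed.

Lemma sin_lsum r l x sg : (forall p, In p l -> Rabs (sin (IZR (snd p - r) * x)) <= sg) ->
  Rabs (sin (IZR (lsum r l) * x)) <= labs l * sg.
Proof.
  intros H. induction l; simpl.
  - rewrite Rmult_0_l, sin_0, Rabs_R0. lra.
  - rewrite plus_IZR, Rmult_plus_distr_r. eapply Rle_trans. apply abs_sin_plus.
    rewrite mult_IZR, Rmult_assoc. eapply Rle_trans. apply Rplus_le_compat_r. apply abs_sin_int.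
    assert (H1 := H a (or_introl eq_refl)). assert (0 <= Rabs (IZR (fst a))) by apply Rabs_pos.
    assert (Rabs (IZR (fst a)) * Rabs (sin (IZR (snd a - r) * x)) <= Rabs (IZR (fst a)) * sg) by (apply Rmult_le_compat_l; auto).
    assert (IH := IHl (fun p Hp => H p (or_intror Hp))). lra.
Qed.

Lemma sin_lb_eq y : sin_lb y = y - y ^ 3 / 6 + y ^ 5 / 120 - y ^ 7 / 5040.
Proof.
  unfold sin_lb, sin_approx. cbn [sum_f_R0]. unfold sin_term. rewrite !INR_IZR_INZ.
  cbn -[IZR Rdiv pow Rmult]. unfold Rdiv. simpl pow. field.
Qed.

Lemma sin_lower y : 0 <= y -> y <= PI / 2 -> y / 4 <= sin y.
Proof.
  intros H1 H2. assert (H := SIN y H1 ltac:(assert (0 < PI) by apply PI_RGT_0; lra)).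
  destruct H as [H _]. eapply Rle_trans; [|exact H]. rewrite sin_lb_eq.
  assert (PI <= 4) by apply PI_4. assert (y <= 2) by lra.
  set (z := y * y). assert (0 <= z) by (unfold z; nra). assert (z <= 4) by (unfold z; nra).
  replace (y ^ 7) with (y * (z * z * z)) by (unfold z; ring). replace (y ^ 5) with (y * (z * z)) by (unfold z; ring).
  replace (y ^ 3) with (y * z) by (unfold z; ring).
  assert (0 <= z * z) by nra.
  assert (0 <= z * z * (1/120 - z / 5040)) by (apply Rmult_le_pos; lra).
  assert (0 <= 3/4 - z / 6 + z * z / 120 - z * z * z / 5040) by nra.
  assert (0 <= y * (3/4 - z / 6 + z * z / 120 - z * z * z / 5040)) by (apply Rmult_le_pos; lra).
  lra.
Qed.


Lemma zis_zero : zis (fun _ => 0) 0.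
Proof. apply (zis_single (fun _ => 0) 0%Z); auto. Qed.

Lemma zis_delta_val f j : zis (fun k => if Z.eq_dec k j then f else 0) f.
Proof.
  assert (H := zis_single (fun k => if Z.eq_dec k j then f else 0) j).
  simpl in H. destruct (Z.eq_dec j j); [|contradiction]. apply H.
  intros k Hk. destruct (Z.eq_dec k j); [contradiction|auto].
Qed.

Lemma F_le_1 F k : prob F -> F k <= 1.
Proof.
  intros [HF [Hs H1]]. rewrite <- H1.
  eapply zis_le; [apply zis_delta_val with (j := k)|apply summable_zis; auto|].
  intro i. cbv beta. destruct (Z.eq_dec i k). subst; lra. apply HF.
Qed.

Lemma Cmod_unit (x y : R) : exists c s, c ^ 2 + s ^ 2 = 1 /\ c * x + s * y = Cmod (x, y).
Proof.
  unfold Cmod; simpl fst; simpl snd.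
  set (r := sqrt (x ^ 2 + y ^ 2)).
  assert (Hr : r * r = x ^ 2 + y ^ 2) by (apply sqrt_sqrt; nra).
  destruct (Req_dec r 0) as [E|E].
  - exists 1, 0. split. ring. rewrite E in Hr. assert (x = 0) by nra. subst. ring_simplify. auto.
  - exists (x / r), (y / r). split.
    + field_simplify; auto. rewrite <- Hr. field. auto.
    + field_simplify; auto. rewrite <- Hr. field. auto.
Qed.

Lemma pair_bound F j r th : prob F -> F j <> 0 -> F r <> 0 ->
  F j * F r / 2 * (1 - cos (IZR (j - r) * th)) <= 1 - Cmod (hat F th).
Proof.
  intros HP Hj Hr. assert (HP' := HP). destruct HP' as [HF [Hs H1]].
  destruct (Cmod_unit (hatc F th) (hats F th)) as [c [s [Hcs Hcs2]]].
  unfold hat. rewrite <- Hcs2.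
  set (x := fun k : Z => c * cos (IZR k * th) + s * sin (IZR k * th)).
  assert (Hx : forall k, x k <= 1).
  { intro k. unfold x. assert (E := sin2_cos2 (IZR k * th)). unfold Rsqr in E.
    assert (0 <= (c * sin (IZR k * th) - s * cos (IZR k * th)) ^ 2) by apply pow2_ge_0.
    assert ((c * cos (IZR k * th) + s * sin (IZR k * th)) ^ 2 <= 1) by nra. nra. }
  assert (Z : zis (fun k => F k * (1 - x k)) (1 - (c * hatc F th + s * hats F th))).
  { assert (Z1 := summable_zis F Hs). rewrite H1 in Z1.
    assert (Z2 := zis_scal (- c) _ _ (summable_zis _ (summable_trig F (fun j t => cos (IZR j * t)) th Hs (fun j => abs_cos_le1 _)))).
    assert (Z3 := zis_scal (- s) _ _ (summable_zis _ (summable_trig F (fun j t => sin (IZR j * t)) th Hs (fun j => abs_sin_le1 _)))).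
    assert (Z4 := zis_plus _ _ _ _ Z1 (zis_plus _ _ _ _ Z2 Z3)).
    replace (1 - (c * hatc F th + s * hats F th)) with
      (1 + (- c * zsum (fun j => F j * cos (IZR j * th)) + - s * zsum (fun j => F j * sin (IZR j * th)))).
    eapply zis_ext; [|exact Z4]. intro k. unfold x. cbv beta. ring.
    unfold hatc, hats. ring. }
  assert (Hnn : forall k, 0 <= F k * (1 - x k)). { intro k. apply Rmult_le_pos. apply HF. specialize (Hx k). lra. }
  assert (Fj1 := F_le_1 F j HP). assert (Fr1 := F_le_1 F r HP).
  assert (Fj0 : 0 < F j) by (destruct (HF j); auto; congruence).
  assert (Fr0 : 0 < F r) by (destruct (HF r); auto; congruence).
  destruct (Z.eq_dec j r) as [E|E].
  - subst. rewrite Z.sub_diag, Rmult_0_l, cos_0. rewrite Rminus_diag, Rmult_0_r.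
    eapply zis_le; [exact zis_zero|exact Z|]. auto.
  - assert (Z2 := zis_plus _ _ _ _ (zis_delta_val (F j * (1 - x j)) j) (zis_delta_val (F r * (1 - x r)) r)).
    assert (L : F j * (1 - x j) + F r * (1 - x r) <= 1 - (c * hatc F th + s * hats F th)).
    { eapply zis_le; [exact Z2|exact Z|]. intro k. cbv beta.
      destruct (Z.eq_dec k j); destruct (Z.eq_dec k r); subst; try congruence.
      all: try lra. specialize (Hnn k). lra. }
    assert (T : (1 - cos (IZR (j - r) * th)) / 2 <= (1 - x j) + (1 - x r)).
    { rewrite minus_IZR. replace ((IZR j - IZR r) * th) with (IZR j * th - IZR r * th) by ring.
      rewrite cos_minus. unfold x.
      assert (E1 := sin2_cos2 (IZR j * th)). assert (E2 := sin2_cos2 (IZR r * th)). unfold Rsqr in E1, E2.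
      set (a1 := cos (IZR j * th)) in *. set (b1 := sin (IZR j * th)) in *.
      set (a2 := cos (IZR r * th)) in *. set (b2 := sin (IZR r * th)) in *.
      assert (0 <= (a1 + a2 - 2 * c) ^ 2 + (b1 + b2 - 2 * s) ^ 2) by (apply Rplus_le_le_0_compat; apply pow2_ge_0).
      nra. }
    assert (Hxj := Hx j). assert (Hxr := Hx r).
    assert (F j * F r * (1 - x j) <= F j * (1 - x j)).
    { assert (0 <= F j * (1 - x j)) by (apply Rmult_le_pos; lra). nra. }
    assert (F j * F r * (1 - x r) <= F r * (1 - x r)).
    { assert (0 <= F r * (1 - x r)) by (apply Rmult_le_pos; lra). nra. }
    assert (0 <= F j * F r) by nra.
    assert (F j * F r * ((1 - cos (IZR (j - r) * th)) / 2) <= F j * F r * ((1 - x j) + (1 - x r))) by (apply Rmult_le_compat_l; auto).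
    lra.
Qed.


Lemma eps_list F r (l : list (Z * Z)) : prob F -> F r <> 0 -> (forall p, In p l -> F (snd p) <> 0) ->
  exists e, 0 < e /\ forall p, In p l -> e <= F (snd p) * F r / 2.
Proof.
  intros [HF _] Hr Hl. assert (Fr0 : 0 < F r) by (destruct (HF r); auto; congruence).
  induction l as [|a l IH].
  - exists 1. split. lra. intros p [].
  - destruct IH as [e [He H]]. intros p Hp. apply Hl. right; auto.
    assert (Fa : 0 < F (snd a)) by (destruct (HF (snd a)); auto; exfalso; apply (Hl a); [left; auto|auto]).
    exists (Rmin e (F (snd a) * F r / 2)). split.
    + apply Rmin_glb_lt; auto. apply Rmult_lt_0_compat; [nra|lra].
    + intros p [<-|Hp]. apply Rmin_r. eapply Rle_trans. apply Rmin_l. auto.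
Qed.

Lemma abs_sin_half_lower th : - PI <= th <= PI -> th ^ 2 / 64 <= sin (th / 2) ^ 2.
Proof.
  intros Hth.
  assert (Hs : Rabs th / 8 <= Rabs (sin (th / 2))).
  { destruct (Rle_dec 0 th).
    - rewrite Rabs_pos_eq by auto. assert (th / 2 / 4 <= sin (th / 2)) by (apply sin_lower; lra).
      rewrite Rabs_pos_eq; lra.
    - rewrite Rabs_left by lra. assert (- th / 2 / 4 <= sin (- th / 2)) by (apply sin_lower; lra).
      replace (- th / 2) with (- (th / 2)) in H by field. rewrite sin_neg in H.
      rewrite Rabs_left1; lra. }
  rewrite <- (pow2_abs (sin _)). assert (0 <= Rabs th) by apply Rabs_pos.
  assert ((Rabs th / 8) ^ 2 <= Rabs (sin (th / 2)) ^ 2) by (apply pow_incr; lra).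
  rewrite <- (pow2_abs th). lra.
Qed.

Lemma rho_bound F : prob F -> aperiodic F ->
  exists kap, 0 < kap /\ forall th, - PI <= th <= PI -> kap * th ^ 2 <= 1 - Cmod (hat F th).
Proof.
  intros HP Hap. assert (HP' := HP). destruct HP' as [HF [Hs H1]].
  destruct (exists_nonzero F H1) as [r Hr].
  destruct (bezout_list F r Hap Hr) as [l [Hl Hlsum]].
  destruct (eps_list F r l HP Hr Hl) as [e [He Hel]].
  set (U := labs l). assert (U0 : 0 <= U) by apply labs_nonneg.
  exists (e / (32 * (U ^ 2 + 1))). split.
  { apply Rdiv_lt_0_compat; auto. assert (0 <= U ^ 2) by apply pow2_ge_0. lra. }
  intros th Hth.
  set (R1 := 1 - Cmod (hat F th)).
  assert (R10 : 0 <= R1).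
  { assert (H := pair_bound F r r th HP Hr Hr). rewrite Z.sub_diag, Rmult_0_l, cos_0 in H. unfold R1. lra. }
  set (sg := sqrt (R1 / (2 * e))).
  assert (Hp : forall p, In p l -> Rabs (sin (IZR (snd p - r) * (th / 2))) <= sg).
  { intros p Hp. assert (Hpb := pair_bound F (snd p) r th HP (Hl p Hp) Hr).
    assert (He' := Hel p Hp).
    assert (C0 : 0 <= 1 - cos (IZR (snd p - r) * th)) by (assert (H := COS_bound (IZR (snd p - r) * th)); lra).
    assert (e * (1 - cos (IZR (snd p - r) * th)) <= R1) by (unfold R1; nra).
    rewrite one_minus_cos in H. replace (IZR (snd p - r) * th / 2) with (IZR (snd p - r) * (th / 2)) in H by field.
    unfold sg. rewrite <- (sqrt_pow2 (Rabs (sin (IZR (snd p - r) * (th / 2))))) by apply Rabs_pos. apply sqrt_le_1_alt.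
    rewrite pow2_abs. apply Rmult_le_reg_l with (2 * e). lra. field_simplify. lra. lra. }
  assert (HS := sin_lsum r l (th / 2) sg Hp). rewrite Hlsum, Rmult_1_l in HS. fold U in HS.
  assert (sg0 : 0 <= sg) by apply sqrt_pos.
  assert (Hsg2 : sg ^ 2 = R1 / (2 * e)) by (unfold sg; rewrite pow2_sqrt; auto; apply Rdiv_le_0_compat; lra).
  assert (S2 : sin (th / 2) ^ 2 <= U ^ 2 * (R1 / (2 * e))).
  { rewrite <- Hsg2, <- Rpow_mult_distr, <- (pow2_abs (sin _)). apply pow_incr. split; auto. apply Rabs_pos. }
  assert (L := abs_sin_half_lower th Hth).
  assert (U2 : 0 <= U ^ 2) by apply pow2_ge_0.
  assert (th ^ 2 <= 32 * (U ^ 2 + 1) * R1 / e).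
  { apply Rle_trans with (64 * (U ^ 2 * (R1 / (2 * e)))). lra.
    unfold Rdiv. replace (64 * (U ^ 2 * (R1 * / (2 * e)))) with (32 * U ^ 2 * R1 * / e) by (field; lra).
    apply Rmult_le_compat_r. apply Rlt_le, Rinv_0_lt_compat; lra. nra. }
  fold R1. apply Rmult_le_reg_l with (32 * (U ^ 2 + 1) / e).
  apply Rdiv_lt_0_compat; lra.
  replace (32 * (U ^ 2 + 1) / e * (e / (32 * (U ^ 2 + 1)) * th ^ 2)) with (th ^ 2) by (field; lra).
  replace (32 * (U ^ 2 + 1) / e * R1) with (32 * (U ^ 2 + 1) * R1 / e) by (field; lra). lra.
Qed.


Lemma pow_le1 y n : 0 <= y <= 1 -> y ^ n <= 1.
Proof. intros H. induction n. simpl; lra. simpl. assert (0 <= y ^ n) by (apply pow_le; lra). nra. Qed.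

Lemma pow_bern x N : 0 <= x <= 1 -> (1 - x) ^ N * (1 + INR N * x) <= 1.
Proof.
  intros Hx. induction N. simpl. lra.
  rewrite S_INR. simpl pow.
  assert (0 <= (1 - x) ^ N) by (apply pow_le; lra).
  assert ((1 - x) * (1 + (INR N + 1) * x) <= 1 + INR N * x).
  { assert (0 <= INR N) by apply pos_INR. nra. }
  assert ((1 - x) ^ N * ((1 - x) * (1 + (INR N + 1) * x)) <= (1 - x) ^ N * (1 + INR N * x)) by (apply Rmult_le_compat_l; auto).
  replace ((1 - x) * (1 - x) ^ N * (1 + (INR N + 1) * x)) with ((1 - x) ^ N * ((1 - x) * (1 + (INR N + 1) * x))) by ring.
  lra.
Qed.

Lemma pow_bound1 x N : 0 <= x <= 1 -> (1 - x) ^ N <= 2 / (1 + (INR N + 1) * x).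
Proof.
  intros Hx. assert (H := pow_bern x N Hx). assert (0 <= INR N) by apply pos_INR.
  assert (0 <= (1 - x) ^ N) by (apply pow_le; lra).
  apply Rmult_le_reg_r with (1 + (INR N + 1) * x). nra.
  unfold Rdiv. rewrite Rmult_assoc, Rinv_l by nra.
  assert ((1 - x) ^ N * (1 + (INR N + 1) * x) <= (1 - x) ^ N * (2 * (1 + INR N * x))) by (apply Rmult_le_compat_l; nra).
  lra.
Qed.

Lemma pow_bound2 x N : 0 <= x <= 1 ->
  (1 - x) ^ N <= 4 / (1 + (INR (Nat.div2 N) + 1) * x) ^ 2.
Proof.
  intros Hx. set (M := Nat.div2 N).
  assert (HN : (2 * M <= N)%nat) by (unfold M; assert (H := Nat.div2_odd N); destruct (Nat.odd N); simpl in H; lia).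
  assert (0 <= 1 - x) by lra.
  assert ((1 - x) ^ N <= (1 - x) ^ (2 * M)).
  { replace N with (2 * M + (N - 2 * M))%nat at 1 by lia. rewrite pow_add.
    assert ((1 - x) ^ (N - 2 * M) <= 1) by (apply pow_le1; lra).
    assert (0 <= (1 - x) ^ (2 * M)) by (apply pow_le; lra). nra. }
  assert (B := pow_bound1 x M Hx).
  assert (0 <= (1 - x) ^ M) by (apply pow_le; lra).
  assert (((1 - x) ^ M) ^ 2 <= (2 / (1 + (INR M + 1) * x)) ^ 2) by (apply pow_incr; auto).
  replace ((1 - x) ^ (2 * M)) with (((1 - x) ^ M) ^ 2) in H0 by (rewrite <- pow_mult; f_equal; lia).
  assert (0 <= INR M) by apply pos_INR.
  replace (4 / (1 + (INR M + 1) * x) ^ 2) with ((2 / (1 + (INR M + 1) * x)) ^ 2) by (field; nra).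
  lra.
Qed.

Lemma int_lorentz b : 0 < b ->
  RInt (fun t => 1 / (1 + b * t ^ 2)) (- PI) PI <= PI / sqrt b.
Proof.
  intros Hb. assert (Sb : 0 < sqrt b) by (apply sqrt_lt_R0; auto).
  assert (Eb : sqrt b * sqrt b = b) by (apply sqrt_sqrt; lra).
  assert (D : forall x, Rmin (- PI) PI <= x <= Rmax (- PI) PI ->
     is_derive (fun t => atan (sqrt b * t) / sqrt b) x (1 / (1 + b * x ^ 2))).
  { intros x _. auto_derive. auto.
    replace (sqrt b * x * (sqrt b * x * 1)) with (sqrt b * sqrt b * x ^ 2) by ring. rewrite Eb.
    assert (0 <= x ^ 2) by apply pow2_ge_0. field. split; nra. }
  assert (C : forall x, Rmin (- PI) PI <= x <= Rmax (- PI) PI -> continuous (fun t => 1 / (1 + b * t ^ 2)) x).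
  { intros x _. apply continuity_pt_filterlim.
    apply continuity_pt_div. apply continuity_pt_const; intros ? ?; auto.
    apply ct_plus. apply ct_const. apply ct_mult. apply ct_const. apply ct_pow. apply ct_id.
    assert (0 <= x ^ 2) by apply pow2_ge_0. nra. }
  rewrite (is_RInt_unique _ _ _ _ (is_RInt_derive _ _ _ _ D C)).
  unfold minus, plus, opp; simpl.
  assert (A1 := atan_bound (sqrt b * PI)). assert (A2 := atan_bound (sqrt b * - PI)).
  apply Rmult_le_reg_r with (sqrt b); auto.
  unfold Rdiv. field_simplify; try lra. 
Qed.

Lemma int_second b : 0 < b ->
  RInt (fun t => t ^ 2 / (1 + b * t ^ 2) ^ 2) (- PI) PI <= PI / (2 * b * sqrt b).
Proof.
  intros Hb. assert (Sb : 0 < sqrt b) by (apply sqrt_lt_R0; auto).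
  assert (Eb : sqrt b * sqrt b = b) by (apply sqrt_sqrt; lra).
  assert (D : forall x, Rmin (- PI) PI <= x <= Rmax (- PI) PI ->
     is_derive (fun t => (atan (sqrt b * t) / sqrt b - t / (1 + b * t ^ 2)) / (2 * b)) x (x ^ 2 / (1 + b * x ^ 2) ^ 2)).
  { intros x _. assert (0 <= x ^ 2) by apply pow2_ge_0. assert (0 <= x * (x * 1)) by nra. auto_derive. nra.
    replace (sqrt b * x * (sqrt b * x * 1)) with (sqrt b * sqrt b * x ^ 2) by ring. rewrite Eb.
    field. repeat split; nra. }
  assert (C : forall x, Rmin (- PI) PI <= x <= Rmax (- PI) PI -> continuous (fun t => t ^ 2 / (1 + b * t ^ 2) ^ 2) x).
  { intros x _. apply continuity_pt_filterlim.
    apply continuity_pt_div. apply ct_pow. apply ct_id.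
    apply ct_pow. apply ct_plus. apply ct_const. apply ct_mult. apply ct_const. apply ct_pow. apply ct_id.
    assert (0 <= x ^ 2) by apply pow2_ge_0. apply pow_nonzero. nra. }
  rewrite (is_RInt_unique _ _ _ _ (is_RInt_derive _ _ _ _ D C)).
  unfold minus, plus, opp; simpl.
  assert (A1 := atan_bound (sqrt b * PI)). assert (A2 := atan_bound (sqrt b * - PI)).
  assert (HP := PI_RGT_0). assert (0 <= PI * (PI * 1)) by nra.
  assert (0 < 1 + b * (PI * (PI * 1))) by nra. assert (0 < 1 + b * (- PI * (- PI * 1))) by nra.
  assert (0 <= PI / (1 + b * (PI * (PI * 1)))) by (apply Rdiv_le_0_compat; lra).
  replace (- PI * (- PI * 1)) with (PI * (PI * 1)) by ring.
  apply Rmult_le_reg_r with (2 * b * sqrt b). nra.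
  unfold Rdiv. field_simplify; try lra.
  assert (Hd : 0 < PI ^ 2 * b + 1) by nra.
  apply (Rmult_le_reg_r (PI ^ 2 * b + 1)); [lra|]. unfold Rdiv. rewrite Rmult_assoc, Rinv_l by lra.
  assert (Q1 : (atan (sqrt b * PI) - atan (sqrt b * - PI)) * (PI ^ 2 * b + 1) <= PI * (PI ^ 2 * b + 1)) by (apply Rmult_le_compat_r; lra).
  assert (0 <= sqrt b * PI) by nra.
  lra.
Qed.


Lemma ct_rho c N : continuity (fun t => (1 - c * t ^ 2) ^ N).
Proof. apply ct_pow. apply ct_minus. apply ct_const. apply ct_mult. apply ct_const. apply ct_pow. apply ct_id. Qed.

Lemma ct_lor b : 0 < b -> continuity (fun t => 1 / (1 + b * t ^ 2)).
Proof. intros Hb x. apply continuity_pt_div. apply continuity_pt_const; intros ? ?; auto.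
  apply ct_plus. apply ct_const. apply ct_mult. apply ct_const. apply ct_pow. apply ct_id.
  assert (0 <= x ^ 2) by apply pow2_ge_0. nra. Qed.

Lemma ct_sec b : 0 < b -> continuity (fun t => t ^ 2 / (1 + b * t ^ 2) ^ 2).
Proof. intros Hb x. apply continuity_pt_div. apply ct_pow. apply ct_id.
  apply ct_pow. apply ct_plus. apply ct_const. apply ct_mult. apply ct_const. apply ct_pow. apply ct_id.
  assert (0 <= x ^ 2) by apply pow2_ge_0. apply pow_nonzero. nra. Qed.

Lemma int_pow1 c N : 0 < c -> c * PI ^ 2 <= 1 ->
  RInt (fun t => (1 - c * t ^ 2) ^ N) (- PI) PI <= 2 * PI / sqrt ((INR N + 1) * c).
Proof.
  intros Hc HcP. assert (HP := PI_RGT_0). set (b := (INR N + 1) * c).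
  assert (Hb : 0 < b) by (unfold b; assert (0 <= INR N) by apply pos_INR; nra).
  apply Rle_trans with (RInt (fun t => scal 2 (1 / (1 + b * t ^ 2))) (- PI) PI).
  - apply RInt_le. lra. apply ct_exRInt. apply ct_rho.
    apply ct_exRInt. apply (ct_mult (fun _ => 2)). apply ct_const. apply ct_lor; auto.
    intros t Ht. unfold scal; cbn -[pow]; unfold mult; cbn -[pow].
    assert (0 <= t ^ 2) by apply pow2_ge_0. assert (t ^ 2 <= PI ^ 2).
    { rewrite <- (pow2_abs t), <- (pow2_abs PI). apply pow_incr. split. apply Rabs_pos.
      rewrite (Rabs_pos_eq PI) by lra. apply Rabs_le. lra. }
    assert (B := pow_bound1 (c * t ^ 2) N ltac:(split; nra)).
    unfold b. replace (2 * (1 / (1 + (INR N + 1) * c * t ^ 2))) with (2 / (1 + (INR N + 1) * (c * t ^ 2))). auto.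
    field. assert (0 <= INR N) by apply pos_INR. assert (0 <= (INR N + 1) * c * t ^ 2) by (apply Rmult_le_pos; [nra|auto]).
    assert (0 <= (INR N + 1) * (c * t ^ 2)) by (apply Rmult_le_pos; [lra|nra]). repeat split; lra.
  - rewrite (RInt_scal (V := R_CompleteNormedModule)). unfold scal; cbn -[pow RInt]; unfold mult; cbn -[pow RInt].
    assert (I := int_lorentz b Hb). unfold Rdiv in *. lra.
    apply ct_exRInt. apply ct_lor; auto.
Qed.

Lemma int_pow2 c N : 0 < c -> c * PI ^ 2 <= 1 ->
  RInt (fun t => t ^ 2 * (1 - c * t ^ 2) ^ N) (- PI) PI <=
    2 * PI / (((INR (Nat.div2 N) + 1) * c) * sqrt ((INR (Nat.div2 N) + 1) * c)).
Proof.
  intros Hc HcP. assert (HP := PI_RGT_0). set (b := (INR (Nat.div2 N) + 1) * c).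
  assert (Hb : 0 < b) by (unfold b; assert (0 <= INR (Nat.div2 N)) by apply pos_INR; nra).
  apply Rle_trans with (RInt (fun t => scal 4 (t ^ 2 / (1 + b * t ^ 2) ^ 2)) (- PI) PI).
  - apply RInt_le. lra. apply ct_exRInt. apply ct_mult. apply ct_pow. apply ct_id. apply ct_rho.
    apply ct_exRInt. apply (ct_mult (fun _ => 4)). apply ct_const. apply ct_sec; auto.
    intros t Ht. unfold scal; cbn -[pow]; unfold mult; cbn -[pow].
    assert (0 <= t ^ 2) by apply pow2_ge_0. assert (t ^ 2 <= PI ^ 2).
    { rewrite <- (pow2_abs t), <- (pow2_abs PI). apply pow_incr. split. apply Rabs_pos.
      rewrite (Rabs_pos_eq PI) by lra. apply Rabs_le. lra. }
    assert (B := pow_bound2 (c * t ^ 2) N ltac:(split; nra)).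
    unfold b. replace (4 * (t ^ 2 / (1 + (INR (Nat.div2 N) + 1) * c * t ^ 2) ^ 2))
      with (t ^ 2 * (4 / (1 + (INR (Nat.div2 N) + 1) * (c * t ^ 2)) ^ 2)).
    apply Rmult_le_compat_l; auto.
    field. assert (0 <= INR (Nat.div2 N)) by apply pos_INR. assert (0 <= (INR (Nat.div2 N) + 1) * c * t ^ 2) by (apply Rmult_le_pos; [nra|auto]).
    assert (0 <= (INR (Nat.div2 N) + 1) * (c * t ^ 2)) by (apply Rmult_le_pos; [lra|nra]). repeat split; lra.
  - rewrite (RInt_scal (V := R_CompleteNormedModule)). unfold scal; cbn -[pow RInt]; unfold mult; cbn -[pow RInt].
    assert (I := int_second b Hb). fold b.
    replace (2 * PI / (b * sqrt b)) with (4 * (PI / (2 * b * sqrt b))). lra.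
    field. split; [|lra]. apply Rgt_not_eq, sqrt_lt_R0; auto.
    apply ct_exRInt. apply ct_sec; auto.
Qed.


Lemma nat_div2_facts n : (1 <= n)%nat ->
  INR n - 1 <= 2 * (INR (Nat.div2 (n - 2)) + 1) /\ INR n <= 4 * (INR (Nat.div2 (n - 2)) + 1).
Proof.
  intros Hn. set (M := Nat.div2 (n - 2)).
  assert (H := Nat.div2_odd (n - 2)). fold M in H.
  assert (HN : (n <= 2 * M + 3)%nat) by (destruct (Nat.odd (n - 2)); simpl in H; lia).
  apply le_INR in HN. rewrite plus_INR, mult_INR in HN. simpl in HN.
  assert (0 <= INR M) by apply pos_INR. split; lra.
Qed.

Definition Kb (G : Z -> R) (m : R) := 2 * ((Rabs m + 1) * zsum (Wt G)).
Definition Mb (G : Z -> R) (m : R) := 2 * zsum (fun j => (IZR j - m) ^ 2 * Rabs (G j)).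

Lemma gbound G m c k n :
  summable (Wt G) -> zsum G = 1 -> m = zsum (fun j => IZR j * G j) -> 0 < c -> c * PI ^ 2 <= 1 ->
  (forall t, - PI <= t <= PI -> Cmod (hat G t) <= 1 - c * t ^ 2) -> (1 <= n)%nat ->
  Rabs (convpow G n k) * (INR n + (IZR k - INR n * m) ^ 2) <=
    sqrt (INR n) * ((1 + Mb G m) / sqrt c + 4 * Kb G m ^ 2 / (c * sqrt c)).
Proof.
  intros HW HG1 Hm Hc HcP Hhat Hn.
  assert (HP := PI_RGT_0).
  assert (HG := sum_G G HW). assert (HGa := sum_G1 G m HW). assert (HGb := sum_G2' G m HW).
  set (G1 := fun j => (IZR j - m) * G j). set (G2 := fun j => (IZR j - m) ^ 2 * G j).
  set (K := Kb G m). set (M := Mb G m).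
  assert (K0 : 0 <= K).
  { unfold K, Kb. apply Rmult_le_pos. lra. apply Rmult_le_pos. assert (0 <= Rabs m) by apply Rabs_pos. lra.
    eapply zis_le; [apply zis_zero | apply summable_zis, HW | apply Wt_nonneg]. }
  assert (ABC : forall t, - PI <= t <= PI -> forall n,
     Cmod (Af G n t) <= (1 - c * t ^ 2) ^ n /\
     Cmod (Bf G G1 n t) <= INR n * (K * Rabs t) * (1 - c * t ^ 2) ^ Nat.pred n /\
     Cmod (Cf G G1 G2 n t) <= INR n * M * (1 - c * t ^ 2) ^ Nat.pred n +
        INR n * (INR n - 1) * (K * Rabs t) ^ 2 * (1 - c * t ^ 2) ^ (n - 2)).
  { intros t Ht. apply ABC_bounds.
    - auto.
    - unfold G1, K, Kb. apply hatG1_bound; auto.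
    - unfold G2, M, Mb. apply hatG2_bound; auto.
    - eapply Rle_trans; [apply Cmod_ge_0|apply Hhat; auto].
    - apply Rmult_le_pos; auto. apply Rabs_pos. }
  assert (BA : Rabs (convpow G n k) <= 1 / sqrt ((INR n + 1) * c)).
  { rewrite (repA G n k HG). eapply Rle_trans.
    apply (rep_bound _ (fun t => (1 - c * t ^ 2) ^ n)). apply ctA; auto. apply ct_rho.
    intros t Ht. apply (ABC t Ht n).
    assert (I := int_pow1 c n Hc HcP).
    apply Rle_trans with (/ (2 * PI) * (2 * PI / sqrt ((INR n + 1) * c))).
    apply Rmult_le_compat_l. apply Rlt_le, Rinv_0_lt_compat. lra. auto.
    right. field. split. apply Rgt_not_eq, sqrt_lt_R0. assert (0 <= INR n) by apply pos_INR. nra. lra. }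
  set (b2 := (INR (Nat.div2 (n - 2)) + 1) * c).
  assert (Hn0 : 1 <= INR n) by (apply (le_INR 1); auto).
  assert (Hb2 : 0 < b2) by (unfold b2; assert (0 <= INR (Nat.div2 (n - 2))) by apply pos_INR; nra).
  assert (M0 : 0 <= M).
  { unfold M, Mb. apply Rmult_le_pos. lra. eapply zis_le; [apply zis_zero | apply summable_zis, sum_G2; auto |].
    intro j. apply Rmult_le_pos. apply pow2_ge_0. apply Rabs_pos. }
  assert (BC : Rabs ((IZR k - INR n * m) ^ 2 * convpow G n k) <=
      INR n * M / sqrt (INR n * c) + INR n * (INR n - 1) * K ^ 2 / (b2 * sqrt b2)).
  { rewrite (repC G m n k HG HGa HGb). fold G1 G2. eapply Rle_trans.
    apply (rep_bound _ (fun t => INR n * M * (1 - c * t ^ 2) ^ Nat.pred n +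
        INR n * (INR n - 1) * (K * Rabs t) ^ 2 * (1 - c * t ^ 2) ^ (n - 2))).
    apply ctCf; auto.
    apply ct_plus. apply ct_mult. apply ct_const. apply ct_rho.
    apply ct_mult. apply ct_mult. apply ct_const. apply ct_pow. apply ct_mult. apply ct_const. apply ct_abs. apply ct_id. apply ct_rho.
    intros t Ht. apply (ABC t Ht n).
    rewrite (RInt_ext _ (fun t => plus (scal (INR n * M) ((1 - c * t ^ 2) ^ Nat.pred n))
         (scal (INR n * (INR n - 1) * K ^ 2) (t ^ 2 * (1 - c * t ^ 2) ^ (n - 2))))).
    2: { intros t _. unfold plus, scal; simpl; unfold mult; simpl.
      assert (Ht2 : Rabs t * Rabs t = t * t) by (rewrite <- Rabs_mult; apply Rabs_pos_eq; nra).
      replace (K * Rabs t * (K * Rabs t * 1)) with (K * K * (Rabs t * Rabs t)) by ring. rewrite Ht2. ring. }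
    assert (CR1 : continuity (fun t => (1 - c * t ^ 2) ^ Nat.pred n)) by apply ct_rho.
    assert (CR2 : continuity (fun t => t ^ 2 * (1 - c * t ^ 2) ^ (n - 2))) by (apply ct_mult; [apply ct_pow, ct_id|apply ct_rho]).
    rewrite (RInt_plus (V := R_CompleteNormedModule)).
    2: apply ct_exRInt; apply (ct_mult (fun _ => INR n * M)); [apply ct_const|exact CR1].
    2: apply ct_exRInt; apply (ct_mult (fun _ => INR n * (INR n - 1) * K ^ 2)); [apply ct_const|exact CR2].
    rewrite !(RInt_scal (V := R_CompleteNormedModule)).
    2: apply ct_exRInt, CR2. 2: apply ct_exRInt, CR1.
    unfold plus, scal; simpl; unfold mult; simpl.
    assert (I1 := int_pow1 c (Nat.pred n) Hc HcP).
    replace (INR (Nat.pred n) + 1) with (INR n) in I1 by (destruct n; [lia|simpl Nat.pred; rewrite S_INR; ring]).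
    assert (I2 := int_pow2 c (n - 2) Hc HcP). fold b2 in I2.
    assert (0 <= INR n * (INR n - 1) * K ^ 2) by (apply Rmult_le_pos; [nra|apply pow2_ge_0]).
    assert (0 <= INR n * M) by nra.
    assert (Hpi : 0 < / (2 * PI)) by (apply Rinv_0_lt_compat; lra).
    apply Rle_trans with (/ (2 * PI) * (INR n * M * (2 * PI / sqrt (INR n * c)) +
                          INR n * (INR n - 1) * K ^ 2 * (2 * PI / (b2 * sqrt b2)))).
    apply Rmult_le_compat_l. lra. apply Rplus_le_compat; apply Rmult_le_compat_l; auto.
    right. field. assert (0 < sqrt b2) by (apply sqrt_lt_R0; auto).
    assert (0 < sqrt (INR n * c)) by (apply sqrt_lt_R0; nra). repeat split; nra. }
  set (x := IZR k - INR n * m) in *. set (g := convpow G n k) in *.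
  set (L := sqrt (INR n)). set (q := sqrt c). set (S := sqrt (INR (Nat.div2 (n - 2)) + 1)).
  assert (HL : L * L = INR n) by (apply sqrt_sqrt; lra).
  assert (Hq : q * q = c) by (apply sqrt_sqrt; lra).
  assert (HD0 : 0 <= INR (Nat.div2 (n - 2))) by apply pos_INR.
  assert (HS : S * S = INR (Nat.div2 (n - 2)) + 1) by (apply sqrt_sqrt; lra).
  assert (L0 : 0 < L) by (apply sqrt_lt_R0; lra). assert (q0 : 0 < q) by (apply sqrt_lt_R0; lra).
  assert (S0 : 0 < S) by (apply sqrt_lt_R0; lra).
  assert (E1 : sqrt (INR n * c) = L * q) by (apply sqrt_mult; lra).
  assert (E2 : sqrt b2 = S * q) by (unfold b2; apply sqrt_mult; lra).
  assert (E3 : L * q <= sqrt ((INR n + 1) * c)) by (rewrite <- E1; apply sqrt_le_1_alt; nra).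
  destruct (nat_div2_facts n Hn) as [F1 F2].
  assert (LS : L <= 2 * S) by nra.
  assert (Hnn : INR n * (INR n - 1) <= 4 * L * (S * S * S)).
  { rewrite <- HL. assert (0 <= INR n - 1) by lra. rewrite <- HS in F1.
    assert (L * L * (INR n - 1) <= L * L * (2 * (S * S))) by (apply Rmult_le_compat_l; nra).
    assert (L * L * (2 * (S * S)) <= L * (2 * S) * (2 * (S * S))).
    { apply Rmult_le_compat_r. nra. apply Rmult_le_compat_l; lra. }
    nra. }
  assert (Ag : 0 <= Rabs g) by apply Rabs_pos.
  rewrite Rmult_plus_distr_l.
  replace (Rabs g * x ^ 2) with (Rabs (x ^ 2 * g)) by (rewrite Rabs_mult, (Rabs_pos_eq (x ^ 2)) by apply pow2_ge_0; ring).
  assert (T1 : Rabs g * INR n <= L / q).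
  { apply Rle_trans with (1 / sqrt ((INR n + 1) * c) * INR n). apply Rmult_le_compat_r; lra.
    apply Rle_trans with (1 / (L * q) * INR n). apply Rmult_le_compat_r. lra.
    unfold Rdiv; rewrite !Rmult_1_l. apply Rinv_le_contravar; [nra|exact E3].
    right. rewrite <- HL. field. lra. }
  rewrite E1, E2 in BC.
  assert (T2 : INR n * M / (L * q) = L * M / q) by (rewrite <- HL; field; lra).
  assert (T3 : INR n * (INR n - 1) * K ^ 2 / (b2 * (S * q)) <= 4 * K ^ 2 / (c * q) * L).
  { unfold b2. rewrite <- HS, <- Hq. unfold Rdiv.
    replace (INR n * (INR n - 1) * K ^ 2 * / ((S * S * (q * q)) * (S * q))) with
            ((INR n * (INR n - 1)) * (K ^ 2 * / (S * S * S * (q * q * q)))) by (field; lra).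
    replace (4 * K ^ 2 * / (q * q * q) * L) with ((4 * L * (S * S * S)) * (K ^ 2 * / (S * S * S * (q * q * q)))) by (field; lra).
    apply Rmult_le_compat_r; auto. apply Rmult_le_pos. apply pow2_ge_0.
    apply Rlt_le, Rinv_0_lt_compat. repeat apply Rmult_lt_0_compat; auto. }
  rewrite T2 in BC.
  replace (L * ((1 + M) / q + 4 * K ^ 2 / (c * q))) with (L / q + L * M / q + 4 * K ^ 2 / (c * q) * L) by (field; lra).
  lra.
Qed.


Lemma lor_atan L t : 1 <= L -> L / (L ^ 2 + t ^ 2) <= 2 * (atan ((t + 1/2) / L) - atan ((t - 1/2) / L)).
Proof.
  intros HL.
  destruct (MVT_cor2 atan (fun x => / (1 + x ^ 2)) ((t - 1/2) / L) ((t + 1/2) / L)) as [xi [E [H1 H2]]].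
  { apply Rmult_lt_compat_r. apply Rinv_0_lt_compat; lra. lra. }
  { intros. apply derivable_pt_lim_atan. }
  rewrite E. set (y := L * xi).
  assert (Hy1 : t - 1/2 < y). { unfold y. apply Rmult_lt_compat_l with (r := L) in H1. field_simplify in H1. lra. lra. lra. }
  assert (Hy2 : y < t + 1/2). { unfold y. apply Rmult_lt_compat_l with (r := L) in H2. field_simplify in H2. lra. lra. lra. }
  assert ((y - t) ^ 2 <= 1/4) by nra. assert (0 <= (y - 2 * t) ^ 2) by apply pow2_ge_0.
  assert (Hy : y ^ 2 <= 2 * t ^ 2 + 1/2) by nra.
  assert (Exi : xi = y / L) by (unfold y; field; lra). rewrite Exi.
  replace ((t + 1 / 2) / L - (t - 1 / 2) / L) with (1 / L) by (field; lra).
  assert (0 <= t ^ 2) by apply pow2_ge_0. assert (0 <= y ^ 2) by apply pow2_ge_0.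
  replace (2 * (/ (1 + (y / L) ^ 2) * (1 / L))) with (2 * L / (L ^ 2 + y ^ 2)) by (field; split; nra).
  assert (Q : L ^ 2 + y ^ 2 <= 2 * (L ^ 2 + t ^ 2)) by nra.
  assert (Q2 : / (2 * (L ^ 2 + t ^ 2)) <= / (L ^ 2 + y ^ 2)) by (apply Rinv_le_contravar; nra).
  unfold Rdiv. replace (/ (L ^ 2 + t ^ 2)) with (2 * / (2 * (L ^ 2 + t ^ 2))) by (field; nra).
  assert (0 <= L) by lra. nra.
Qed.

Lemma sum_telescope (phi : nat -> R) N : sum_n (fun i => phi (S i) - phi i) N = phi (S N) - phi O.
Proof. induction N. rewrite sum_O. auto. rewrite sum_Sn, IHN. unfold plus; simpl. ring. Qed.

Lemma sum_telescope_c (phi : nat -> R) c N : sum_n (fun i => c * (phi (S i) - phi i)) N = c * (phi (S N) - phi O).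
Proof. induction N. rewrite sum_O. auto. rewrite sum_Sn, IHN. unfold plus; simpl. ring. Qed.

Lemma series_le_bound (a : nat -> R) B : (forall n, 0 <= a n) -> (forall N, sum_n a N <= B) -> Series a <= B.
Proof.
  intros Ha HB. assert (E : ex_finite_lim_seq (sum_n a)).
  { apply ex_finite_lim_seq_incr with B; auto. intro n. rewrite sum_Sn. unfold plus; simpl. specialize (Ha (S n)). lra. }
  destruct E as [l Hl]. unfold Series. rewrite (is_lim_seq_unique _ _ Hl).
  assert (Rbar_le l B). { eapply is_lim_seq_le; [|exact Hl|apply is_lim_seq_const]. auto. }
  exact H.
Qed.

Lemma L1_bound (g : Z -> R) D L mu : 1 <= L -> 0 <= D ->
  (forall k, Rabs (g k) <= D * (L / (L ^ 2 + (IZR k - mu) ^ 2))) ->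
  L1norm g <= 4 * PI * D.
Proof.
  intros HL HD Hg. unfold L1norm, zsum. assert (HP := PI_RGT_0).
  assert (A1 : Series (zpos (fun k => Rabs (g k))) <= 2 * PI * D).
  { apply series_le_bound. intro; apply Rabs_pos. intro N.
    set (phi := fun i : nat => atan ((INR i - mu - 1/2) / L)).
    apply Rle_trans with (sum_n (fun i => 2 * D * (phi (S i) - phi i)) N).
    - unfold sum_n. apply sum_n_m_le. intro i. unfold zpos. eapply Rle_trans. apply Hg.
      replace (2 * D * (phi (S i) - phi i)) with (D * (2 * (phi (S i) - phi i))) by ring. apply Rmult_le_compat_l; auto.
      unfold phi. rewrite <- INR_IZR_INZ, S_INR.
      replace (INR i + 1 - mu - 1 / 2) with ((INR i - mu) + 1/2) by lra.
      replace (INR i - mu - 1 / 2) with ((INR i - mu) - 1/2) by lra. apply lor_atan; auto.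
    - rewrite sum_telescope_c.
      unfold phi. assert (B1 := atan_bound ((INR (S N) - mu - 1/2) / L)). assert (B2 := atan_bound ((INR 0 - mu - 1/2) / L)).
      assert (0 <= 2 * D) by lra.
      assert (2 * D * (atan ((INR (S N) - mu - 1 / 2) / L) - atan ((INR 0 - mu - 1 / 2) / L)) <= 2 * D * PI) by (apply Rmult_le_compat_l; lra).
      lra. }
  assert (A2 : Series (zneg (fun k => Rabs (g k))) <= 2 * PI * D).
  { apply series_le_bound. intro; apply Rabs_pos. intro N.
    set (phi := fun i : nat => atan ((- INR i - mu - 1/2) / L)).
    apply Rle_trans with (sum_n (fun i => - (2 * D) * (phi (S i) - phi i)) N).
    - unfold sum_n. apply sum_n_m_le. intro i. unfold zneg. eapply Rle_trans. apply Hg.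
      replace (- (2 * D) * (phi (S i) - phi i)) with (D * (2 * (phi i - phi (S i)))) by ring.
      apply Rmult_le_compat_l; auto.
      unfold phi. rewrite opp_IZR, <- INR_IZR_INZ, S_INR.
      replace (- INR i - mu - 1 / 2) with ((- (INR i + 1) - mu) + 1/2) by lra.
      replace (- (INR i + 1) - mu - 1 / 2) with ((- (INR i + 1) - mu) - 1/2) by lra. apply lor_atan; auto.
    - rewrite sum_telescope_c.
      unfold phi. assert (B1 := atan_bound ((- INR (S N) - mu - 1/2) / L)). assert (B2 := atan_bound ((- INR 0 - mu - 1/2) / L)).
      assert (0 <= 2 * D) by lra.
      assert (2 * D * (atan ((- INR 0 - mu - 1 / 2) / L) - atan ((- INR (S N) - mu - 1 / 2) / L)) <= 2 * D * PI) by (apply Rmult_le_compat_l; lra).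
      lra. }
  lra.
Qed.


Lemma summable_plus f g : summable f -> summable g -> summable (fun k => f k + g k).
Proof.
  intros Hf Hg. apply summable_le with (fun k => Rabs (f k) + Rabs (g k)).
  intro k. apply Rabs_triang.
  destruct (summable_abs f Hf) as [F1 F2]. destruct (summable_abs g Hg) as [G1 G2].
  split.
  - apply (@ex_series_le R_AbsRing R_CompleteNormedModule) with (fun n => Rabs (zpos (fun k => Rabs (f k)) n) + Rabs (zpos (fun k => Rabs (g k)) n)).
    intro n. unfold zpos. change (norm ?x) with (Rabs x). rewrite !Rabs_Rabsolu.
    rewrite Rabs_pos_eq; [apply Rle_refl| apply Rplus_le_le_0_compat; apply Rabs_pos].
    apply (ex_series_plus (V := R_NormedModule)); auto.
  - apply (@ex_series_le R_AbsRing R_CompleteNormedModule) with (fun n => Rabs (zneg (fun k => Rabs (f k)) n) + Rabs (zneg (fun k => Rabs (g k)) n)).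
    intro n. unfold zneg. change (norm ?x) with (Rabs x). rewrite !Rabs_Rabsolu.
    rewrite Rabs_pos_eq; [apply Rle_refl| apply Rplus_le_le_0_compat; apply Rabs_pos].
    apply (ex_series_plus (V := R_NormedModule)); auto.
Qed.

Lemma summable_single f m : (forall k, k <> m -> f k = 0) -> summable f.
Proof.
  intros H. destruct (zis_single (fun k => Rabs (f k)) m) as [lp [ln [H1 [H2 _]]]].
  intros k Hk. rewrite H; auto. apply Rabs_R0.
  split; eexists; [exact H1|exact H2].
Qed.

Lemma delta0_single : forall k, k <> 0%Z -> delta 0 k = 0.
Proof. intros k Hk. unfold delta. destruct (Z.eq_dec k 0); [contradiction|auto]. Qed.

Lemma L1norm_delta0 : L1norm (delta 0) = 1.
Proof.
  unfold L1norm. apply zis_zsum.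
  replace 1 with ((fun k => Rabs (delta 0 k)) 0%Z) by (unfold delta; simpl; apply Rabs_R1).
  apply (zis_single (fun k => Rabs (delta 0 k)) 0%Z). intros k Hk. rewrite delta0_single; auto. apply Rabs_R0.
Qed.

Lemma zis_delta0_trig (tr : R -> R) th : zis (fun j => delta 0 j * tr (IZR j * th)) (tr 0).
Proof.
  replace (tr 0) with ((fun j => delta 0 j * tr (IZR j * th)) 0%Z) by (unfold delta; simpl; rewrite Rmult_0_l; ring).
  apply (zis_single (fun j => delta 0 j * tr (IZR j * th)) 0%Z). intros k Hk. rewrite delta0_single; auto. ring.
Qed.

Lemma hatG_eq F a th : summable F -> a <> 1 ->
  hatc (fun j => (F j - a * delta 0 j) / (1 - a)) th = (hatc F th - a) / (1 - a) /\
  hats (fun j => (F j - a * delta 0 j) / (1 - a)) th = hats F th / (1 - a).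
Proof.
  intros HF Ha. split.
  - unfold hatc. apply zis_zsum.
    assert (Z1 := summable_zis _ (summable_trig F (fun j t => cos (IZR j * t)) th HF (fun j => abs_cos_le1 _))).
    assert (Z2 := zis_scal (- a) _ _ (zis_delta0_trig cos th)).
    assert (Z3 := zis_scal (/ (1 - a)) _ _ (zis_plus _ _ _ _ Z1 Z2)).
    rewrite cos_0 in Z3. replace ((zsum (fun j => F j * cos (IZR j * th)) - a) / (1 - a)) with
      (/ (1 - a) * (zsum (fun j => F j * cos (IZR j * th)) + - a * 1)) by (field; lra).
    eapply zis_ext; [|exact Z3]. intro k. cbv beta. field. lra.
  - unfold hats. apply zis_zsum.
    assert (Z1 := summable_zis _ (summable_trig F (fun j t => sin (IZR j * t)) th HF (fun j => abs_sin_le1 _))).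
    assert (Z2 := zis_scal (- a) _ _ (zis_delta0_trig sin th)).
    assert (Z3 := zis_scal (/ (1 - a)) _ _ (zis_plus _ _ _ _ Z1 Z2)).
    rewrite sin_0 in Z3. replace (zsum (fun j => F j * sin (IZR j * th)) / (1 - a)) with
      (/ (1 - a) * (zsum (fun j => F j * sin (IZR j * th)) + - a * 0)) by (field; lra).
    eapply zis_ext; [|exact Z3]. intro k. cbv beta. field. lra.
Qed.

Lemma FC_lower F th : prob F -> summable (fun k => IZR k ^ 2 * F k) ->
  1 - zsum (fun k => IZR k ^ 2 * F k) * th ^ 2 / 2 <= hatc F th.
Proof.
  intros [HF [Hs H1]] Hsq.
  assert (Z1 := summable_zis F Hs). rewrite H1 in Z1.
  assert (Z2 := zis_scal (-1) _ _ (summable_zis _ (summable_trig F (fun j t => cos (IZR j * t)) th Hs (fun j => abs_cos_le1 _)))).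
  assert (Z3 := zis_plus _ _ _ _ Z1 Z2).
  assert (Z4 := zis_scal (th ^ 2 / 2) _ _ (summable_zis _ Hsq)).
  assert (L : 1 + -1 * hatc F th <= th ^ 2 / 2 * zsum (fun k => IZR k ^ 2 * F k)).
  { eapply zis_le; [exact Z3|exact Z4|]. intro k. cbv beta.
    assert (H := one_minus_cos_le (IZR k * th)). assert (0 <= F k) by apply HF.
    replace ((IZR k * th) ^ 2 / 2) with (th ^ 2 / 2 * IZR k ^ 2) in H by (field).
    nra. }
  lra.
Qed.


Theorem lemma8p1 (F : Z -> R) :
  prob F -> aperiodic F ->
  summable (fun k => IZR k ^ 2 * F k) ->
  exists beta : R, 0 < beta < 1 /\
    exists G : Z -> R,
      summable G /\
      (exists M : R, forall n : nat, L1norm (convpow G n) <= M) /\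
      (forall k : Z, F k = beta * G k + (1 - beta) * delta 0 k).
Proof.
  intros HP Hap Hsq. assert (HP' := HP). destruct HP' as [HF [Hs H1]].
  assert (HPI := PI_RGT_0).
  destruct (rho_bound F HP Hap) as [kap [Hk Hrho]].
  set (s2 := zsum (fun k => IZR k ^ 2 * F k)).
  assert (s20 : 0 <= s2).
  { eapply zis_le; [apply zis_zero|apply summable_zis, Hsq|]. intro k. apply Rmult_le_pos. apply pow2_ge_0. apply HF. }
  set (a := Rmin (1/2) (kap / (2 * s2 + 2))).
  assert (Ha0 : 0 < a) by (apply Rmin_glb_lt; [lra|apply Rdiv_lt_0_compat; lra]).
  assert (Ha1 : a <= 1/2) by apply Rmin_l.
  assert (Ha2 : a * s2 <= kap / 2).
  { assert (a <= kap / (2 * s2 + 2)) by apply Rmin_r.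
    apply Rle_trans with (kap / (2 * s2 + 2) * s2). apply Rmult_le_compat_r; auto.
    unfold Rdiv. apply Rmult_le_reg_r with (2 * s2 + 2). lra.
    replace (kap * / (2 * s2 + 2) * s2 * (2 * s2 + 2)) with (kap * s2) by (field; lra).
    replace (kap * / 2 * (2 * s2 + 2)) with (kap * s2 + kap) by field. lra. }
  assert (KP : kap * PI ^ 2 <= 1).
  { assert (H := Hrho PI ltac:(lra)). assert (0 <= Cmod (hat F PI)) by apply Cmod_ge_0. lra. }
  exists (1 - a). split. lra.
  set (G := fun j => (F j - a * delta 0 j) / (1 - a)).
  assert (HW : summable (Wt G)).
  { apply summable_le with (fun j => / (1 - a) * ((F j + IZR j ^ 2 * F j) + a * ((1 + IZR j ^ 2) * delta 0 j))).
    - intro j. rewrite Rabs_pos_eq by (apply Wt_nonneg). unfold Wt, G.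
      assert (Hd : 0 <= delta 0 j) by (unfold delta; destruct (Z.eq_dec j 0); lra).
      assert (Hj : 0 <= IZR j ^ 2) by apply pow2_ge_0.
      unfold Rdiv. rewrite Rabs_mult, (Rabs_pos_eq (/ (1 - a))) by (apply Rlt_le, Rinv_0_lt_compat; lra).
      assert (Rabs (F j - a * delta 0 j) <= F j + a * delta 0 j).
      { eapply Rle_trans. apply Rabs_triang. rewrite Rabs_Ropp, Rabs_mult, !Rabs_pos_eq; try lra. all: try apply HF. }
      assert (0 < / (1 - a)) by (apply Rinv_0_lt_compat; lra).
      assert (0 <= Rabs (F j - a * delta 0 j)) by apply Rabs_pos.
      assert (HFj := HF j).
      replace (/ (1 - a) * (F j + IZR j ^ 2 * F j + a * ((1 + IZR j ^ 2) * delta 0 j)))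
        with ((1 + IZR j ^ 2) * (/ (1 - a) * (F j + a * delta 0 j))) by ring.
      apply Rmult_le_compat_l. lra. rewrite Rmult_comm. apply Rmult_le_compat_l; lra.
    - apply summable_scal. apply summable_plus. apply summable_plus; auto.
      apply summable_scal. apply (summable_single _ 0%Z). intros k Hk0. rewrite delta0_single; auto. ring. }
  assert (HG := sum_G G HW).
  exists G. split; [exact HG|]. split.
  2: { intro k. unfold G. field. lra. }
  assert (HG1 : zsum G = 1).
  { apply zis_zsum. assert (Z1 := summable_zis F Hs). rewrite H1 in Z1.
    assert (Zd : zis (delta 0) 1).
    { replace 1 with (delta 0 0) by (unfold delta; simpl; auto). apply zis_single. apply delta0_single. }
    assert (Z3 := zis_scal (/ (1 - a)) _ _ (zis_plus _ _ _ _ Z1 (zis_scal (- a) _ _ Zd))).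
    replace 1 with (/ (1 - a) * (1 + - a * 1)) by (field; lra).
    eapply zis_ext; [|exact Z3]. intro k. unfold G. cbv beta. field. lra. }
  set (m := zsum (fun j => IZR j * G j)).
  set (c := kap / 4).
  assert (Hc : 0 < c) by (unfold c; lra). assert (HcP : c * PI ^ 2 <= 1) by (unfold c; lra).
  assert (Hhat : forall t, - PI <= t <= PI -> Cmod (hat G t) <= 1 - c * t ^ 2).
  { intros t Ht. destruct (hatG_eq F a t Hs ltac:(lra)) as [E1 E2].
    assert (R1 := Hrho t Ht). assert (FL := FC_lower F t HP Hsq). fold s2 in FL.
    set (FC := hatc F t) in *. set (FS := hats F t) in *.
    assert (Er : Cmod (hat F t) = sqrt (FC ^ 2 + FS ^ 2)) by reflexivity.
    set (rho := Cmod (hat F t)) in *.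
    assert (r0 : 0 <= rho) by apply Cmod_ge_0.
    assert (Hr2 : rho ^ 2 = FC ^ 2 + FS ^ 2) by (rewrite Er; apply pow2_sqrt; nra).
    assert (t2 : 0 <= t ^ 2) by apply pow2_ge_0.
    assert (kt : 0 <= kap * t ^ 2) by (apply Rmult_le_pos; lra).
    assert (r1 : rho <= 1) by lra.
    assert (Hrr : rho ^ 2 <= 1 - kap * t ^ 2) by nra.
    assert (N1 : (FC - a) ^ 2 + FS ^ 2 <= (1 - a) ^ 2 - kap / 2 * t ^ 2).
    { assert (a * FC >= a * (1 - s2 * t ^ 2 / 2)) by (apply Rle_ge, Rmult_le_compat_l; lra).
      assert (a * s2 * t ^ 2 <= kap / 2 * t ^ 2) by (apply Rmult_le_compat_r; auto). nra. }
    unfold hat, G. rewrite E1, E2. unfold Cmod. cbn [fst snd].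
    set (y := kap / 2 * t ^ 2).
    assert (y0 : 0 <= y) by (unfold y; nra).
    assert (Q : ((FC - a) / (1 - a)) ^ 2 + (FS / (1 - a)) ^ 2 <= 1 - y).
    { replace (((FC - a) / (1 - a)) ^ 2 + (FS / (1 - a)) ^ 2) with (((FC - a) ^ 2 + FS ^ 2) / (1 - a) ^ 2) by (field; lra).
      apply Rle_trans with (((1 - a) ^ 2 - y) / (1 - a) ^ 2).
      unfold Rdiv. apply Rmult_le_compat_r. apply Rlt_le, Rinv_0_lt_compat. nra. fold y in N1. lra.
      replace (((1 - a) ^ 2 - y) / (1 - a) ^ 2) with (1 - y / (1 - a) ^ 2) by (field; lra).
      assert (y <= y / (1 - a) ^ 2).
      { unfold Rdiv. rewrite <- (Rmult_1_r y) at 1. apply Rmult_le_compat_l; auto.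
        rewrite <- Rinv_1. apply Rinv_le_contravar. nra. nra. }
      lra. }
    assert (Y1 : y <= 1).
    { assert (0 <= ((FC - a) / (1 - a)) ^ 2 + (FS / (1 - a)) ^ 2) by (apply Rplus_le_le_0_compat; apply pow2_ge_0). lra. }
    replace (1 - c * t ^ 2) with (1 - y / 2) by (unfold y, c; field).
    rewrite <- (sqrt_pow2 (1 - y / 2)) by lra. apply sqrt_le_1_alt. nra. }
  set (D := (1 + Mb G m) / sqrt c + 4 * Kb G m ^ 2 / (c * sqrt c)).
  assert (Hsc : 0 < sqrt c) by (apply sqrt_lt_R0; auto).
  assert (D0 : 0 <= D).
  { unfold D. assert (0 <= Mb G m).
    { unfold Mb. apply Rmult_le_pos. lra. eapply zis_le; [apply zis_zero | apply summable_zis, sum_G2; auto |].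
      intro j. apply Rmult_le_pos. apply pow2_ge_0. apply Rabs_pos. }
    apply Rplus_le_le_0_compat. apply Rdiv_le_0_compat; lra.
    apply Rdiv_le_0_compat. apply Rmult_le_pos. lra. apply pow2_ge_0. nra. }
  exists (Rmax 1 (4 * PI * D)). intro n. destruct n as [|n].
  - simpl. rewrite L1norm_delta0. apply Rmax_l.
  - eapply Rle_trans; [|apply Rmax_r].
    assert (Hn : (1 <= S n)%nat) by lia.
    set (L := sqrt (INR (S n))).
    assert (HL2 : L ^ 2 = INR (S n)) by (unfold L; apply pow2_sqrt; apply pos_INR).
    assert (HL : 1 <= L).
    { unfold L. rewrite <- sqrt_1. apply sqrt_le_1_alt. apply (le_INR 1). lia. }
    apply (L1_bound _ D L (INR (S n) * m)); auto.
    intro k. assert (B := gbound G m c k (S n) HW HG1 eq_refl Hc HcP Hhat Hn). fold D L in B.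
    rewrite HL2.
    assert (P : 0 < INR (S n) + (IZR k - INR (S n) * m) ^ 2).
    { assert (0 <= (IZR k - INR (S n) * m) ^ 2) by apply pow2_ge_0. assert (1 <= INR (S n)) by (apply (le_INR 1); lia). lra. }
    apply Rmult_le_reg_r with (INR (S n) + (IZR k - INR (S n) * m) ^ 2); auto.
    replace (D * (L / (INR (S n) + (IZR k - INR (S n) * m) ^ 2)) * (INR (S n) + (IZR k - INR (S n) * m) ^ 2))
      with (L * D) by (field; lra).
    exact B.
Qed.
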